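(* (1) Let $h_i:(\mathbb{R}^{n_i},0)\to(\mathbb{R}^{n_i},0)$, $i=1,2$, be homeomorphism germs. Both $h_1$ and $h_2$ are (SSP) bi-Lipschitz homeomorphisms if and only if $h_1\times h_2:(\mathbb{R}^{n_1}\times\mathbb{R}^{n_2},(0,0))\to(\mathbb{R}^{n_1}\times\mathbb{R}^{n_2},(0,0))$ is an (SSP) bi-Lipschitz homeomorphism. (2) Let $h:(\mathbb{R}^n,0)\to(\mathbb{R}^n,0)$ be a bi-Lipschitz homeomorphism germ. Then $I_n\times h:(\mathbb{R}^n\times\mathbb{R}^n,(0,0))\to(\mathbb{R}^n\times\mathbb{R}^n,(0,0))$ (or $I_n\times h^{-1}$) satisfies condition semiline-(SSP) if and only if $I_n\times h$ is an (SSP) map. (3) Let $h:(\mathbb{R}^n,0)\to(\mathbb{R}^n,0)$ be a bi-Lipschitz homeomorphism germ. Then $h$ is an (SSP) map if and only if $I_n\times h$ (or $I_n\times h^{-1}$) satisfies condition semiline-(SSP). Here $I_n$ denotes the identity map of $\mathbb{R}^n$.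
   Context: For a set-germ $A\subset\mathbb{R}^k$ at $0$ with $0\in\overline A$, $D(A)=\{a\in S^{k-1}:\exists\, x_i\in A\setminus\{0\},\ x_i\to0,\ x_i/\|x_i\|\to a\}$. For sequences, $\|u_m\|\ll\|v_m\|,\|w_m\|$ means $\|u_m\|/\|v_m\|\to0$ and $\|u_m\|/\|w_m\|\to0$. $A$ satisfies condition (SSP) if for every sequence $a_m\in\mathbb{R}^k$ tending to $0$ with $\lim a_m/\|a_m\|\in D(A)$ there is a sequence $b_m\in A$ with $\|a_m-b_m\|\ll\|a_m\|,\|b_m\|$. A map germ $h:(\mathbb{R}^k,0)\to(\mathbb{R}^k,0)$ is an (SSP) map if its graph $\{(x,h(x))\}\subset\mathbb{R}^k\times\mathbb{R}^k$ satisfies condition (SSP) at $(0,0)$. A bi-Lipschitz homeomorphism germ is a homeomorphism germ $h$ with $h(0)=0$ and constants $0<K_1\le K_2$ with $K_1\|x-y\|\le\|h(x)-h(y)\|\le K_2\|x-y\|$ near $0$; an (SSP) bi-Lipschitz homeomorphism is one which is also an (SSP) map. A semiline is a set $\{ta:t\ge0\}$ with $a$ a unit vector; a homeomorphism germ $g$ satisfies condition semiline-(SSP) if $D(g(\ell))$ is a single point for every semiline $\ell$. *)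

(* Defs.v *)
(* R^k is modelled as 'rV[R]_k with the
   Euclidean norm [enorm]; R^k x R^k is 'rV[R]_(k + k) via row_mx. *)
From HB Require Import structures.
From mathcomp Require Import all_boot all_order all_algebra.
From mathcomp Require Import all_classical all_reals all_analysis.
Set Implicit Arguments. Unset Strict Implicit. Unset Printing Implicit Defensive.
Import Order.TTheory GRing.Theory Num.Theory.
Import numFieldNormedType.Exports.
Local Open Scope classical_set_scope.
Local Open Scope ring_scope.

Section Defs.
Variable R : realType.

Definition enorm (k : nat) (x : 'rV[R]_k) : R :=
  Num.sqrt (\sum_(i < k) (x ord0 i) ^+ 2).

Definition tends0 (k : nat) (x : nat -> 'rV[R]_k) : Prop :=
  (fun m => enorm (x m)) @ \oo --> (0 : R).

Definition dir_tends (k : nat) (x : nat -> 'rV[R]_k) (a : 'rV[R]_k) : Prop :=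
  (fun m => enorm ((enorm (x m))^-1 *: x m - a)) @ \oo --> (0 : R).

Definition Dir (k : nat) (A : set 'rV[R]_k) : set 'rV[R]_k :=
  [set a | enorm a = 1 /\
     exists x : nat -> 'rV[R]_k,
       (forall i, A (x i) /\ x i <> 0) /\ tends0 x /\ dir_tends x a].

Definition negligible (k : nat) (u v : nat -> 'rV[R]_k) : Prop :=
  (fun m => enorm (u m) / enorm (v m)) @ \oo --> (0 : R).

Definition SSP (k : nat) (A : set 'rV[R]_k) : Prop :=
  forall a : nat -> 'rV[R]_k,
    tends0 a -> (exists2 d, Dir A d & dir_tends a d) ->
    exists b : nat -> 'rV[R]_k,
      (forall m, A (b m)) /\
      negligible (fun m => a m - b m) a /\ negligible (fun m => a m - b m) b.

Definition graph (k : nat) (h : 'rV[R]_k -> 'rV[R]_k) : set 'rV[R]_(k + k) :=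
  range (fun x => row_mx x (h x)).

Definition SSP_map (k : nat) (h : 'rV[R]_k -> 'rV[R]_k) : Prop := SSP (graph h).

(* g is (a representative of) the inverse germ of the homeomorphism germ h:
   h : U -> V and g : V -> U are mutually inverse continuous maps between
   open neighbourhoods U, V of 0, and h 0 = 0. *)
Definition homeo_germ_inv (k : nat) (h g : 'rV[R]_k -> 'rV[R]_k) : Prop :=
  h 0 = 0 /\
  exists U V : set 'rV[R]_k,
    [/\ open U, open V, U 0 & V 0] /\
    [/\ forall x, U x -> V (h x) /\ g (h x) = x,
        forall y, V y -> U (g y) /\ h (g y) = y,
        {within U, continuous h} & {within V, continuous g}].

Definition homeo_germ (k : nat) (h : 'rV[R]_k -> 'rV[R]_k) : Prop :=
  exists g, homeo_germ_inv h g.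

Definition bilipschitz (k : nat) (h : 'rV[R]_k -> 'rV[R]_k) : Prop :=
  h 0 = 0 /\
  exists r K1 K2 : R, [/\ 0 < r, 0 < K1, K1 <= K2 &
    forall x y, enorm x < r -> enorm y < r ->
      K1 * enorm (x - y) <= enorm (h x - h y) <= K2 * enorm (x - y)].

Definition bilip_homeo (k : nat) (h : 'rV[R]_k -> 'rV[R]_k) : Prop :=
  homeo_germ h /\ bilipschitz h.

Definition SSP_bilip_homeo (k : nat) (h : 'rV[R]_k -> 'rV[R]_k) : Prop :=
  bilip_homeo h /\ SSP_map h.

Definition semiline (k : nat) (a : 'rV[R]_k) : set 'rV[R]_k :=
  [set t *: a | t in [set t : R | 0 <= t]].

Definition eball0 (k : nat) (r : R) : set 'rV[R]_k := [set x | enorm x < r].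

(* semiline-(SSP): D(g(l)) is a single point for every semiline l; as a germ
   notion, g(l) is taken as g(l ∩ B(0,r)) for all sufficiently small r > 0. *)
Definition semiline_SSP (k : nat) (g : 'rV[R]_k -> 'rV[R]_k) : Prop :=
  exists2 r0 : R, 0 < r0 &
    forall r : R, 0 < r -> r <= r0 ->
    forall a : 'rV[R]_k, enorm a = 1 ->
      exists d, Dir (g @` (semiline a `&` eball0 r)) = [set d].

Definition prod_map (n1 n2 : nat) (h1 : 'rV[R]_n1 -> 'rV[R]_n1)
  (h2 : 'rV[R]_n2 -> 'rV[R]_n2) : 'rV[R]_(n1 + n2) -> 'rV[R]_(n1 + n2) :=
  fun z => row_mx (h1 (lsubmx z)) (h2 (rsubmx z)).

End Defs.

(* Main.v *)
Require Import Defs.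
From HB Require Import structures.
From mathcomp Require Import all_boot all_order all_algebra.
From mathcomp Require Import all_classical all_reals all_analysis.
From mathcomp Require Import ring lra zify.
Set Implicit Arguments. Unset Strict Implicit. Unset Printing Implicit Defensive.
Import Order.TTheory GRing.Theory Num.Theory.
Import numFieldNormedType.Exports.
Local Open Scope classical_set_scope.
Local Open Scope ring_scope.

Section L1.
Variable R : realType.
Implicit Types (k : nat).

Definition cv0 (u : nat -> R) := forall e : R, 0 < e -> exists N, forall m, (N <= m)%N -> `|u m| < e.

Lemma cv0P (u : nat -> R) : u @ \oo --> (0:R) <-> cv0 u.
Proof.
split.
- move=> /cvgrPdist_lt H e e0; have [N _ HN] := H e e0.
  exists N => m Nm; have := HN m Nm; by rewrite sub0r normrN.
- move=> H; apply/cvgrPdist_lt => e e0; have [N HN] := H e e0.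
  exists N => // m /= Nm; rewrite sub0r normrN; exact: HN.
Qed.

End L1.

Section L2.
Variable R : realType.

Lemma sumsq_ge0 k (x : 'rV[R]_k) : 0 <= \sum_(i < k) (x ord0 i) ^+ 2.
Proof. by apply: sumr_ge0 => i _; exact: sqr_ge0. Qed.

Lemma enorm_ge0 k (x : 'rV[R]_k) : 0 <= enorm x.
Proof. exact: sqrtr_ge0. Qed.

Lemma enorm_sq k (x : 'rV[R]_k) : enorm x ^+ 2 = \sum_(i < k) (x ord0 i) ^+ 2.
Proof. by rewrite /enorm sqr_sqrtr // sumsq_ge0. Qed.

Lemma enorm0 k : enorm (0 : 'rV[R]_k) = 0.
Proof. by rewrite /enorm big1 ?sqrtr0 // => i _; rewrite mxE expr0n. Qed.

Lemma enorm_eq0 k (x : 'rV[R]_k) : enorm x = 0 -> x = 0.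
Proof.
move=> H; have : enorm x ^+ 2 = 0 by rewrite H expr0n.
rewrite enorm_sq => /eqP; rewrite psumr_eq0; last by move=> i _; exact: sqr_ge0.
move=> /allP H2; apply/rowP => i; rewrite mxE.
have := H2 i (mem_index_enum i); rewrite implyTb sqrf_eq0 => /eqP.
by rewrite (ord1 ord0) => ->.
Qed.

Lemma enorm_gt0 k (x : 'rV[R]_k) : x <> 0 -> 0 < enorm x.
Proof.
move=> nx; rewrite lt_neqAle enorm_ge0 andbT; apply/eqP => H.
by apply: nx; apply: enorm_eq0.
Qed.

Lemma enormZ k (c : R) (x : 'rV[R]_k) : enorm (c *: x) = `|c| * enorm x.
Proof.
rewrite /enorm.
have -> : \sum_(i < k) ((c *: x) ord0 i) ^+ 2 = c ^+ 2 * \sum_(i < k) (x ord0 i) ^+ 2.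
  by rewrite mulr_sumr; apply: eq_bigr => i _; rewrite mxE exprMn.
by rewrite sqrtrM ?sqr_ge0 // sqrtr_sqr.
Qed.

Lemma enormN k (x : 'rV[R]_k) : enorm (- x) = enorm x.
Proof. by rewrite -scaleN1r enormZ normrN normr1 mul1r. Qed.

Lemma enormB k (x y : 'rV[R]_k) : enorm (x - y) = enorm (y - x).
Proof. by rewrite -enormN opprB. Qed.

Lemma enorm_row_mx_sq n1 n2 (x : 'rV[R]_n1) (y : 'rV[R]_n2) :
  enorm (row_mx x y) ^+ 2 = enorm x ^+ 2 + enorm y ^+ 2.
Proof.
rewrite !enorm_sq big_split_ord /=; congr (_ + _); apply: eq_bigr => i _.
  by rewrite row_mxEl. by rewrite row_mxEr.
Qed.

Lemma sqrt_sq (a : R) : 0 <= a -> Num.sqrt (a ^+ 2) = a.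
Proof. by move=> a0; rewrite sqrtr_sqr ger0_norm. Qed.

Lemma le_sq_enorm (a b : R) : 0 <= b -> a ^+ 2 <= b ^+ 2 -> a <= b.
Proof.
move=> b0 H; have [a0|a0] := leP 0 a; last by apply: le_trans b0; apply: ltW.
by rewrite -(ler_pXn2r (isT : (0 < 2)%N)) ?nnegrE.
Qed.

Lemma coord_le k (x : 'rV[R]_k) i : `|x ord0 i| <= enorm x.
Proof.
apply: le_sq_enorm; first exact: enorm_ge0.
rewrite enorm_sq real_normK ?num_real // (bigD1 i) //= lerDl.
by apply: sumr_ge0 => j _; exact: sqr_ge0.
Qed.

Lemma enorm_row_mx_l n1 n2 (x : 'rV[R]_n1) (y : 'rV[R]_n2) :
  enorm x <= enorm (row_mx x y).
Proof.
apply: le_sq_enorm; first exact: enorm_ge0.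
by rewrite enorm_row_mx_sq lerDl sqr_ge0.
Qed.

Lemma enorm_row_mx_r n1 n2 (x : 'rV[R]_n1) (y : 'rV[R]_n2) :
  enorm y <= enorm (row_mx x y).
Proof.
apply: le_sq_enorm; first exact: enorm_ge0.
by rewrite enorm_row_mx_sq lerDr sqr_ge0.
Qed.

Lemma enorm_row_mx_le n1 n2 (x : 'rV[R]_n1) (y : 'rV[R]_n2) :
  enorm (row_mx x y) <= enorm x + enorm y.
Proof.
apply: le_sq_enorm; first by rewrite addr_ge0 ?enorm_ge0.
rewrite enorm_row_mx_sq.
have := enorm_ge0 x; have := enorm_ge0 y; nra.
Qed.

Lemma enorm_row_mx0 n1 n2 (y : 'rV[R]_n2) :
  enorm (row_mx (0 : 'rV[R]_n1) y) = enorm y.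
Proof.
apply/eqP; rewrite eq_le enorm_row_mx_r andbT.
by have := enorm_row_mx_le (0 : 'rV[R]_n1) y; rewrite enorm0 add0r.
Qed.

Lemma enorm_row_mx0r n1 n2 (x : 'rV[R]_n1) :
  enorm (row_mx x (0 : 'rV[R]_n2)) = enorm x.
Proof.
apply/eqP; rewrite eq_le enorm_row_mx_l andbT.
by have := enorm_row_mx_le x (0 : 'rV[R]_n2); rewrite enorm0 addr0.
Qed.

Lemma enorm_coord_le k (x : 'rV[R]_k) (c : R) :
  (forall i, `|x ord0 i| <= c) -> enorm x <= k%:R * c.
Proof.
move=> H; case: k x H => [|k] x H.
  by rewrite /enorm big_ord0 sqrtr0 mul0r.
have c0 : 0 <= c by apply: le_trans (H ord0).
apply: le_sq_enorm; first by rewrite mulr_ge0.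
rewrite enorm_sq.
apply: (@le_trans _ _ (\sum_(i < k.+1) c ^+ 2)).
  apply: ler_sum => i _; rewrite -real_normK ?num_real //.
  by rewrite lerXn2r ?nnegrE ?normr_ge0 // H.
rewrite sumr_const card_ord -mulr_natr.
have k1 : 1 <= k.+1%:R :> R by rewrite ler1n.
have := sqr_ge0 c; set K := k.+1%:R; nra.
Qed.

Lemma cauchy_schwarz k (x y : 'rV[R]_k) :
  \sum_(i < k) x ord0 i * y ord0 i <= enorm x * enorm y.
Proof.
set P := \sum_(i < k) _.
set a := enorm y; set b := enorm x.
have H : 0 <= \sum_(i < k) (a * x ord0 i - b * y ord0 i) ^+ 2.
  by apply: sumr_ge0 => i _; exact: sqr_ge0.
have E : \sum_(i < k) (a * x ord0 i - b * y ord0 i) ^+ 2 =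
   a ^+ 2 * b ^+ 2 - 2 * a * b * P + b ^+ 2 * a ^+ 2.
  have -> : \sum_(i < k) (a * x ord0 i - b * y ord0 i) ^+ 2 =
    a ^+ 2 * (\sum_(i < k) (x ord0 i) ^+ 2) - 2 * a * b * P
      + b ^+ 2 * (\sum_(i < k) (y ord0 i) ^+ 2).
    rewrite /P !mulr_sumr -sumrB -big_split /=.
    by apply: eq_bigr => i _; ring.
  by rewrite -!enorm_sq.
rewrite E in H.
have a0 : 0 <= a by exact: enorm_ge0.
have b0 : 0 <= b by exact: enorm_ge0.
have [ab0|ab0] := eqVneq (a * b) 0.
  move: ab0 => /eqP; rewrite mulf_eq0 => /orP[] /eqP /enorm_eq0 E0.
  - rewrite /P big1; first exact: mulr_ge0.
    by move=> i _; rewrite E0 mxE mulr0.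
  - rewrite /P big1; first exact: mulr_ge0.
    by move=> i _; rewrite E0 mxE mul0r.
have abp : 0 < a * b by rewrite lt_neqAle eq_sym ab0 mulr_ge0.
rewrite mulrC.
have H2 : 2 * (a * b) * (P - a * b) <= 0 by nra.
have : P - a * b <= 0.
  by move: H2; rewrite pmulr_rle0 // mulr_gt0.
lra.
Qed.

Lemma enormD k (x y : 'rV[R]_k) : enorm (x + y) <= enorm x + enorm y.
Proof.
apply: le_sq_enorm; first by rewrite addr_ge0 ?enorm_ge0.
rewrite enorm_sq.
have -> : \sum_(i < k) ((x + y) ord0 i) ^+ 2 =
   enorm x ^+ 2 + 2 * \sum_(i < k) x ord0 i * y ord0 i + enorm y ^+ 2.
  rewrite !enorm_sq mulr_sumr -!big_split /=; apply: eq_bigr => i _.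
  by rewrite mxE; ring.
have := cauchy_schwarz x y; set P := \sum_(i < k) _ => H.
rewrite sqrrD; lra.
Qed.

Lemma enormDB k (x y z : 'rV[R]_k) : enorm (x - z) <= enorm (x - y) + enorm (y - z).
Proof. by have := enormD (x - y) (y - z); rewrite addrA subrK. Qed.

Lemma enorm_revtri k (x y : 'rV[R]_k) : enorm x - enorm y <= enorm (x - y).
Proof. have := enormD (x - y) y; rewrite subrK; lra. Qed.

End L2.

Section L3.
Variable R : realType.

Definition incr (f : nat -> nat) := forall m, (f m < f m.+1)%N.

Lemma incr_ge f : incr f -> forall m, (m <= f m)%N.
Proof. by move=> H; elim=> [//|m IH]; apply: leq_ltn_trans IH (H m). Qed.

Lemma incr_mono f : incr f -> forall m n, (m <= n)%N -> (f m <= f n)%N.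
Proof.
move=> H m n /subnK <-; elim: (n - m)%N => [//|d IH].
by rewrite addSn; apply: leq_trans IH (ltnW (H _)).
Qed.

Lemma incr_comp f g : incr f -> incr g -> incr (f \o g).
Proof.
move=> Hf Hg m /=; have := incr_mono Hf (Hg m).
by move=> H; apply: leq_trans H; apply: Hf.
Qed.

Lemma cv0_sub (u : nat -> R) f : incr f -> cv0 u -> cv0 (u \o f).
Proof.
move=> Hf H e e0; have [N HN] := H e e0; exists N => m Nm /=.
by apply: HN; apply: leq_trans Nm (incr_ge Hf m).
Qed.

Lemma cv0_le (u v : nat -> R) : (exists N, forall m, (N <= m)%N -> `|u m| <= `|v m|) ->
  cv0 v -> cv0 u.
Proof.
move=> [N0 H0] H e e0; have [N HN] := H e e0; exists (maxn N0 N) => m Nm.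
apply: le_lt_trans (H0 _ _) (HN _ _).
  by apply: leq_trans Nm; apply: leq_maxl.
by apply: leq_trans Nm; apply: leq_maxr.
Qed.

Lemma cv0_le' (u v : nat -> R) : (forall m, `|u m| <= `|v m|) -> cv0 v -> cv0 u.
Proof. by move=> H; apply: cv0_le; exists 0%N. Qed.

Lemma cv0D (u v : nat -> R) : cv0 u -> cv0 v -> cv0 (fun m => u m + v m).
Proof.
move=> Hu Hv e e0.
have e20 : 0 < e / 2 by rewrite divr_gt0.
have [N1 H1] := Hu _ e20; have [N2 H2] := Hv _ e20.
exists (maxn N1 N2) => m Nm.
have := H1 m (leq_trans (leq_maxl _ _) Nm); have := H2 m (leq_trans (leq_maxr _ _) Nm).
have := ler_normD (u m) (v m); lra.
Qed.

Lemma cv0Z (u : nat -> R) (c : R) : cv0 u -> cv0 (fun m => c * u m).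
Proof.
move=> Hu e e0.
have c0 : 0 < `|c| + 1 by rewrite ltr_wpDl.
have [N HN] := Hu (e / (`|c| + 1)) (divr_gt0 e0 c0).
exists N => m Nm; have := HN m Nm; rewrite normrM => H.
have H2 : `|u m| * (`|c| + 1) < e by rewrite -ltr_pdivlMr.
apply: le_lt_trans H2; rewrite mulrDr mulr1 [`|u m| * _]mulrC lerDl //.
Qed.

Lemma cv0M (u v : nat -> R) (M : R) : (forall m, `|v m| <= M) -> cv0 u ->
  cv0 (fun m => u m * v m).
Proof.
move=> Hv Hu; apply: (cv0_le' (v := fun m => `|M| * u m)); last exact: cv0Z.
move=> m; rewrite !normrM normr_id mulrC ler_wpM2r //.
by apply: le_trans (Hv m) _; apply: ler_norm.
Qed.

Lemma cv0_cst0 : cv0 (fun _ => 0 : R).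
Proof. by move=> e e0; exists 0%N => m _; rewrite normr0. Qed.

Lemma cv0_shift (u : nat -> R) N : cv0 (fun m => u (m + N)%N) -> cv0 u.
Proof.
move=> H e e0; have [M HM] := H e e0; exists (M + N)%N => m Mm.
have := HM (m - N)%N; rewrite subnK; last by lia.
by apply; lia.
Qed.

Lemma not_cv0 (u : nat -> R) : ~ cv0 u ->
  exists e, 0 < e /\ exists f, incr f /\ forall m, e <= `|u (f m)|.
Proof.
move=> H.
have [e [e0 He]] : exists e, 0 < e /\ forall N, exists m, (N <= m)%N /\ e <= `|u m|.
  apply: contra_notP H => H e e0.
  apply: contra_notP H => H; exists e; split => // N.
  apply: contra_notP H => H; exists N => m Nm.
  by rewrite ltNge; apply/negP => He; apply: H; exists m.
have [g Hg] := choice He.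
pose f := fix f m := if m is m'.+1 then g (f m').+1 else g 0%N.
exists e; split => //; exists f; split.
  by move=> m /=; have [+ _] := Hg (f m).+1.
by case=> [|m] /=; [exact: (Hg 0%N).2 | exact: (Hg _).2].
Qed.

Definition vlim (k : nat) (u : nat -> 'rV[R]_k) (l : 'rV[R]_k) := cv0 (fun m => enorm (u m - l)).

Lemma vlim_uniq k (u : nat -> 'rV[R]_k) a b : vlim u a -> vlim u b -> a = b.
Proof.
move=> Ha Hb; apply/eqP; rewrite -subr_eq0; apply/eqP/enorm_eq0.
apply/eqP; rewrite eq_le enorm_ge0 andbT; apply/negP => /negP; rewrite -ltNge => H.
have [N HN] := cv0D Ha Hb H; have := HN N (leqnn N).
have := enormDB a (u N) b; rewrite (enormB a (u N)) ger0_norm; last by rewrite addr_ge0 ?enorm_ge0.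
lra.
Qed.

Lemma vlim_sub k (u : nat -> 'rV[R]_k) l f : incr f -> vlim u l -> vlim (u \o f) l.
Proof. by move=> Hf H; apply: (cv0_sub (u := fun m => enorm (u m - l))). Qed.

Lemma vlim_cst k (l : 'rV[R]_k) : vlim (fun _ => l) l.
Proof. by move=> e e0; exists 0%N => m _; rewrite subrr enorm0 normr0. Qed.

Lemma vlimD k (u v : nat -> 'rV[R]_k) a b : vlim u a -> vlim v b ->
  vlim (fun m => u m + v m) (a + b).
Proof.
move=> Ha Hb; apply: cv0_le' (cv0D Ha Hb) => m.
rewrite !ger0_norm ?addr_ge0 ?enorm_ge0 //.
have -> : u m + v m - (a + b) = (u m - a) + (v m - b) by rewrite addrACA opprD.
exact: enormD.
Qed.

Lemma vlimN k (u : nat -> 'rV[R]_k) a : vlim u a -> vlim (fun m => - u m) (- a).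
Proof.
move=> Ha; apply: cv0_le' Ha => m; by rewrite -opprD enormN.
Qed.

Lemma vlimB k (u v : nat -> 'rV[R]_k) a b : vlim u a -> vlim v b ->
  vlim (fun m => u m - v m) (a - b).
Proof. by move=> Ha Hb; apply: vlimD => //; apply: vlimN. Qed.

Lemma vlim0P k (u : nat -> 'rV[R]_k) a : vlim u a <-> vlim (fun m => u m - a) 0.
Proof. by rewrite /vlim; split => H; apply: cv0_le' H => m; rewrite subr0. Qed.

Lemma vlim_enorm k (u : nat -> 'rV[R]_k) a : vlim u a -> cv0 (fun m => enorm (u m) - enorm a).
Proof.
move=> H; apply: cv0_le' H => m; rewrite [X in _ <= X]ger0_norm ?enorm_ge0 //.
rewrite real_ler_norml ?num_real //; apply/andP; split.
  have := enorm_revtri a (u m); rewrite enormB; lra.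
exact: enorm_revtri.
Qed.

Lemma vlim_bounded k (u : nat -> 'rV[R]_k) a : vlim u a -> exists M, forall m, enorm (u m) <= M.
Proof.
move=> /vlim_enorm H; have [N HN] := H 1 ltr01.
exists (enorm a + 1 + \sum_(i < N) enorm (u i)) => m.
have [mN|Nm] := ltnP m N.
  have : enorm (u m) <= \sum_(i < N) enorm (u i).
    rewrite (bigD1 (Ordinal mN)) //= lerDl sumr_ge0 // => i _; exact: enorm_ge0.
  have := enorm_ge0 a; lra.
have := HN m Nm; rewrite real_ltr_norml ?num_real //.
have : 0 <= \sum_(i < N) enorm (u i) by rewrite sumr_ge0 // => i _; exact: enorm_ge0.
lra.
Qed.

Lemma vlimZ k (u : nat -> 'rV[R]_k) a (c : nat -> R) (c0 : R) :
  vlim u a -> cv0 (fun m => c m - c0) -> vlim (fun m => c m *: u m) (c0 *: a).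
Proof.
move=> Hu Hc; have [M HM] := vlim_bounded Hu.
have E : forall m, c m *: u m - c0 *: a = (c m - c0) *: u m + c0 *: (u m - a).
  by move=> m; rewrite scalerBl scalerBr addrA subrK.
apply: (cv0_le' (v := fun m => `|c m - c0| * enorm (u m) + `|c0| * enorm (u m - a))).
  move=> m; rewrite E ger0_norm ?enorm_ge0 //.
  apply: le_trans (enormD _ _) _; rewrite !enormZ.
  exact: ler_norm.
apply: cv0D; last exact: cv0Z.
apply: (cv0M (M := M)) => [m|]; first by rewrite ger0_norm ?enorm_ge0.
by apply: cv0_le' Hc => m; rewrite normr_id.
Qed.

End L3.

Section L4.
Variable R : realType.

Lemma bw_real (u : nat -> R) M : (forall m, `|u m| <= M) ->
  exists f l, incr f /\ cv0 (fun m => u (f m) - l).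
Proof.
move=> HM.
have Hb : bounded_fun u.
  exists M; split; first exact: num_real.
  move=> x Mx y _; apply: le_trans (HM y) (ltW Mx).
have [f /increasing_seqP Hf /cvg_ex [l Hl]] := bolzano_weierstrass Hb.
exists f, l; split; first exact: Hf.
move: Hl => /cvgrPdist_lt Hl e e0; have [N _ HN] := Hl e e0.
exists N => m Nm; rewrite -normrN opprB; exact: HN.
Qed.

End L4.

Section L4b.
Variable R : realType.

Lemma coord_vlim k (u : nat -> 'rV[R]_k) (L : 'I_k -> R) :
  (forall i, cv0 (fun m => u m ord0 i - L i)) -> vlim u (\row_i L i).
Proof.
move=> H e e0.
have k0 : 0 < k%:R + 1 :> R by rewrite ltr_wpDl.
have c0 : 0 < e / (k%:R + 1) by rewrite divr_gt0.
have [N HN] := choice (fun i => H i _ c0).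
exists (\max_(i < k) N i)%N => m Hm.
rewrite ger0_norm ?enorm_ge0 //.
apply: le_lt_trans (enorm_coord_le (c := e / (k%:R + 1)) _) _.
  move=> i; rewrite !mxE; apply: ltW; apply: HN.
  by apply: leq_trans Hm; apply: leq_bigmax.
rewrite mulrA ltr_pdivrMr //; lra.
Qed.

Lemma bw_vec k (u : nat -> 'rV[R]_k) M : (forall m, enorm (u m) <= M) ->
  exists f l, incr f /\ vlim (u \o f) l.
Proof.
move=> HM.
have step : forall j, (j <= k)%N -> exists f, incr f /\
   forall i : 'I_k, (i < j)%N -> exists l, cv0 (fun m => u (f m) ord0 i - l).
  elim=> [_|j IH jk].
    by exists id; split => [m //|i]; rewrite ltn0.
  have [f [Hf Hi]] := IH (ltnW jk).
  have [g [l0 [Hg Hl0]]] := @bw_real R (fun m => u (f m) ord0 (Ordinal jk)) M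
    (fun m => le_trans (coord_le _ _) (HM _)).
  exists (f \o g); split; first exact: incr_comp.
  move=> i; rewrite ltnS leq_eqVlt => /orP[/eqP ij|ij].
    exists l0; have -> : i = Ordinal jk by apply: val_inj.
    exact: Hl0.
  have [l Hl] := Hi i ij; exists l.
  exact: (cv0_sub (u := fun m => u (f m) ord0 i - l)).
have [f [Hf Hi]] := step k (leqnn k).
have [L HL] := choice (fun i : 'I_k => Hi i (ltn_ord i)).
by exists f, (\row_i L i); split => //; apply: coord_vlim.
Qed.

End L4b.

Section L5.
Variable R : realType.

Lemma tends0P k (x : nat -> 'rV[R]_k) : tends0 x <-> cv0 (fun m => enorm (x m)).
Proof. exact: cv0P. Qed.

Lemma dir_tendsP k (x : nat -> 'rV[R]_k) a :
  dir_tends x a <-> vlim (fun m => (enorm (x m))^-1 *: x m) a.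
Proof. exact: cv0P. Qed.

Lemma negligibleP k (u v : nat -> 'rV[R]_k) :
  Defs.negligible u v <-> cv0 (fun m => enorm (u m) / enorm (v m)).
Proof. exact: cv0P. Qed.

Lemma cv0_eq (u v : nat -> R) : (exists N, forall m, (N <= m)%N -> u m = v m) ->
  cv0 v -> cv0 u.
Proof. move=> [N HN]; apply: cv0_le; exists N => m Nm; by rewrite HN. Qed.

Lemma vlim_eq k (u v : nat -> 'rV[R]_k) l : (exists N, forall m, (N <= m)%N -> u m = v m) ->
  vlim v l -> vlim u l.
Proof.
move=> [N HN]; apply: (cv0_eq (v := fun m => enorm (v m - l))).
by exists N => m Nm; rewrite HN.
Qed.

Lemma cv0_ev (u : nat -> R) (P : nat -> Prop) : cv0 u ->
  forall e, 0 < e -> exists N, forall m, (N <= m)%N -> `|u m| < e.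
Proof. by move=> H e e0; apply: H. Qed.

Lemma ev_and (P Q : nat -> Prop) : (exists N, forall m, (N <= m)%N -> P m) ->
  (exists N, forall m, (N <= m)%N -> Q m) ->
  exists N, forall m, (N <= m)%N -> P m /\ Q m.
Proof.
move=> [N1 H1] [N2 H2]; exists (maxn N1 N2) => m Nm; split.
  by apply: H1; apply: leq_trans Nm; apply: leq_maxl.
by apply: H2; apply: leq_trans Nm; apply: leq_maxr.
Qed.

Lemma cv0_small (u : nat -> R) e : cv0 u -> 0 < e -> exists N, forall m, (N <= m)%N -> u m < e.
Proof.
move=> H e0; have [N HN] := H e e0; exists N => m Nm.
by apply: le_lt_trans (ler_norm _) (HN m Nm).
Qed.

Lemma vlim_cv0 k (u : nat -> 'rV[R]_k) : vlim u 0 <-> cv0 (fun m => enorm (u m)).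
Proof. by rewrite /vlim; split => H; apply: cv0_le' H => m; rewrite subr0. Qed.

Lemma vlim_lsub n1 n2 (u : nat -> 'rV[R]_(n1 + n2)) l :
  vlim u l -> vlim (fun m => lsubmx (u m)) (lsubmx l).
Proof.
move=> H; apply: cv0_le' H => m; rewrite !ger0_norm ?enorm_ge0 //.
rewrite -linearB /=.
by rewrite -{2}(hsubmxK (u m - l)); apply: enorm_row_mx_l.
Qed.

Lemma vlim_rsub n1 n2 (u : nat -> 'rV[R]_(n1 + n2)) l :
  vlim u l -> vlim (fun m => rsubmx (u m)) (rsubmx l).
Proof.
move=> H; apply: cv0_le' H => m; rewrite !ger0_norm ?enorm_ge0 //.
rewrite -linearB /=.
by rewrite -{2}(hsubmxK (u m - l)); apply: enorm_row_mx_r.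
Qed.

Lemma vlim_row_mx n1 n2 (u : nat -> 'rV[R]_n1) (v : nat -> 'rV[R]_n2) a b :
  vlim u a -> vlim v b -> vlim (fun m => row_mx (u m) (v m)) (row_mx a b).
Proof.
move=> Ha Hb; apply: cv0_le' (cv0D Ha Hb) => m.
rewrite !ger0_norm ?addr_ge0 ?enorm_ge0 // opp_row_mx add_row_mx.
exact: enorm_row_mx_le.
Qed.

Lemma enorm_lsub n1 n2 (x : 'rV[R]_(n1 + n2)) : enorm (lsubmx x) <= enorm x.
Proof. by rewrite -{2}(hsubmxK x); apply: enorm_row_mx_l. Qed.

Lemma enorm_rsub n1 n2 (x : 'rV[R]_(n1 + n2)) : enorm (rsubmx x) <= enorm x.
Proof. by rewrite -{2}(hsubmxK x); apply: enorm_row_mx_r. Qed.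

Lemma ev_bounded k (u : nat -> 'rV[R]_k) : 
  (exists N M, forall m, (N <= m)%N -> enorm (u m) <= M) -> exists M, forall m, enorm (u m) <= M.
Proof.
move=> [N [M HM]].
exists (`|M| + \sum_(i < N) enorm (u i)) => m.
have S0 : 0 <= \sum_(i < N) enorm (u i) by rewrite sumr_ge0 // => i _; exact: enorm_ge0.
have [mN|Nm] := ltnP m N.
  have : enorm (u m) <= \sum_(i < N) enorm (u i).
    rewrite (bigD1 (Ordinal mN)) //= lerDl sumr_ge0 // => i _; exact: enorm_ge0.
  have := normr_ge0 M; lra.
have := HM m Nm; have := ler_norm M; lra.
Qed.

Lemma vlim_ge k (u : nat -> 'rV[R]_k) l e : vlim u l -> 
  (exists N, forall m, (N <= m)%N -> e <= enorm (u m)) -> e <= enorm l.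
Proof.
move=> /vlim_enorm H [N HN]; rewrite leNgt; apply/negP => le.
have el : 0 < e - enorm l by rewrite subr_gt0.
have [M HM] := H (e - enorm l) el.
have := HN (maxn N M) (leq_maxl _ _); have := HM (maxn N M) (leq_maxr _ _).
rewrite real_ltr_norml ?num_real //; lra.
Qed.

Lemma cv0_inv_nat (c : R) : cv0 (fun m => c / m.+1%:R).
Proof.
move=> e e0.
have c0 : 0 <= `|c| / e by apply: divr_ge0 => //; apply: ltW.
have [N HN] : exists N : nat, `|c| / e < N%:R.
  exists (Num.truncn (`|c| / e)).+1; exact: truncnS_gt.
exists N => m Nm; rewrite normrM normfV normr_nat ltr_pdivrMr ?ltr0n //.
rewrite -ltr_pdivrMl // mulrC; apply: lt_le_trans HN _.
by rewrite ler_nat; apply: leq_trans Nm _.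
Qed.

End L5.

Section L6.
Variable R : realType.

Definition Lip (k : nat) (g : 'rV[R]_k -> 'rV[R]_k) (r K : R) :=
  [/\ g 0 = 0, 0 < r, 0 <= K &
    forall x y, enorm x < r -> enorm y < r -> enorm (g x - g y) <= K * enorm (x - y)].

Lemma inv_bound (x n : R) : 0 < n -> n / 2 <= x ->
  `|x^-1 - n^-1| <= (2 / n ^+ 2) * `|x - n|.
Proof.
move=> n0 xn; have x0 : 0 < x by lra.
have -> : x^-1 - n^-1 = (n - x) / (x * n) by field; rewrite ?gt_eqF //; lra.
rewrite normrM normfV (ger0_norm (ltW (mulr_gt0 x0 n0))) -normrN opprB mulrC.
apply: ler_wpM2r; first exact: normr_ge0.
rewrite -subr_ge0.
have -> : 2 / n ^+ 2 - (x * n)^-1 = (2 * x - n) / (x * n ^+ 2).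
  by field; rewrite ?gt_eqF //; apply/andP; split; rewrite gt_eqF // ?exprn_gt0.
apply: divr_ge0; first lra.
by rewrite ltW // mulr_gt0 // exprn_gt0.
Qed.


Lemma vlim_norm k (C : nat -> 'rV[R]_k) c : vlim C c -> c != 0 ->
  vlim (fun m => (enorm (C m))^-1 *: C m) ((enorm c)^-1 *: c).
Proof.
move=> HC c0; apply: vlimZ => //.
have n0 : 0 < enorm c by apply: enorm_gt0; apply/eqP.
have H := vlim_enorm HC.
have [N HN] := H (enorm c / 2) (divr_gt0 n0 (ltr0Sn _ 1)).
apply: (cv0_le (v := fun m => (2 / enorm c ^+ 2) * (enorm (C m) - enorm c))).
  exists N => m Nm; rewrite normrM (ger0_norm (_ : 0 <= 2 / enorm c ^+ 2)).
    apply: inv_bound => //; have := HN m Nm.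
    rewrite real_ltr_norml ?num_real //; lra.
  by apply: divr_ge0 => //; apply: exprn_ge0; apply: enorm_ge0.
exact: cv0Z.
Qed.

Lemma normalize_ray k (S : R) (C : 'rV[R]_k) : 0 < S ->
  (enorm (S *: C))^-1 *: (S *: C) = (enorm C)^-1 *: C.
Proof.
move=> S0; rewrite enormZ ger0_norm ?ltW // scalerA invfM mulrAC mulVf ?gt_eqF //.
by rewrite mul1r.
Qed.

Lemma ray k (S : nat -> R) (C : nat -> 'rV[R]_k) c : (forall m, 0 < S m) -> cv0 S ->
  vlim C c -> c != 0 ->
  tends0 (fun m => S m *: C m) /\ dir_tends (fun m => S m *: C m) ((enorm c)^-1 *: c).
Proof.
move=> S0 HS HC c0; split.
  apply/tends0P; have [M HM] := vlim_bounded HC.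
  apply: (cv0_le' (v := fun m => S m * M)); last exact: (cv0M (u := S) (v := fun _ => M) (M := `|M|)).
  move=> m; rewrite ger0_norm ?enorm_ge0 // enormZ (ger0_norm (ltW (S0 m))).
  apply: le_trans (ler_norm _); apply: ler_wpM2l; [exact: ltW | exact: HM].
apply/dir_tendsP.
apply: (vlim_eq (v := fun m => (enorm (C m))^-1 *: C m)).
  by exists 0%N => m _; apply: normalize_ray.
exact: vlim_norm.
Qed.

Lemma lip_transfer k (g : 'rV[R]_k -> 'rV[R]_k) r K (s : nat -> R) (y : nat -> 'rV[R]_k) p :
  Lip g r K -> (forall m, 0 < s m) -> cv0 s -> vlim y p ->
  vlim (fun m => (s m)^-1 *: g (s m *: y m) - (s m)^-1 *: g (s m *: p)) 0.
Proof.
move=> [g0 r0 K0 HL] s0 Hs Hy.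
have [M HM] := vlim_bounded Hy.
have M0 : 0 < `|M| + enorm p + 1 by have := enorm_ge0 p; have := normr_ge0 M; lra.
have [N HN] := cv0_small (cv0Z (`|M| + enorm p + 1) Hs) r0.
apply/vlim_cv0; apply: (cv0_le (v := fun m => K * enorm (y m - p))); last exact: cv0Z.
exists N => m Nm.
have Hm := HN m Nm.
have sm := s0 m.
have H1 : enorm (s m *: y m) < r.
  rewrite enormZ (ger0_norm (ltW sm)); apply: le_lt_trans Hm.
  have := HM m; have := enorm_ge0 p; have := ler_norm M; nra.
have H2 : enorm (s m *: p) < r.
  rewrite enormZ (ger0_norm (ltW sm)); apply: le_lt_trans Hm.
  have := enorm_ge0 (y m); have := HM m; have := normr_ge0 M; nra.
rewrite (ger0_norm (enorm_ge0 _)) (ger0_norm (mulr_ge0 K0 (enorm_ge0 _))) -scalerBr enormZ.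
have si : 0 <= (s m)^-1 by rewrite invr_ge0 ltW.
rewrite (ger0_norm si).
apply: le_trans (ler_wpM2l si (HL _ _ H1 H2)) _.
by rewrite -scalerBr enormZ (ger0_norm (ltW sm)) mulrCA mulKf ?gt_eqF.
Qed.

End L6.

Section L7.
Variable R : realType.

Definition DD (k : nat) (g : 'rV[R]_k -> 'rV[R]_k) :=
  forall v (s t : nat -> R), (forall m, 0 < s m) -> (forall m, 0 < t m) -> cv0 s -> cv0 t ->
  vlim (fun m => (s m)^-1 *: g (s m *: v) - (t m)^-1 *: g (t m *: v)) 0.

Lemma DD_lim k (g : 'rV[R]_k -> 'rV[R]_k) v (s t : nat -> R) w : DD g ->
  (forall m, 0 < s m) -> (forall m, 0 < t m) -> cv0 s -> cv0 t ->
  vlim (fun m => (s m)^-1 *: g (s m *: v)) w -> vlim (fun m => (t m)^-1 *: g (t m *: v)) w.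
Proof.
move=> HD s0 t0 Hs Ht Hw.
have := vlimB Hw (HD v s t s0 t0 Hs Ht); rewrite subr0.
by apply: vlim_eq; exists 0%N => m _; rewrite opprB addrC subrK.
Qed.

Lemma lsubmxZ n1 n2 (c : R) (z : 'rV[R]_(n1 + n2)) : lsubmx (c *: z) = c *: lsubmx z.
Proof. by apply/rowP => i; rewrite !mxE. Qed.

Lemma rsubmxZ n1 n2 (c : R) (z : 'rV[R]_(n1 + n2)) : rsubmx (c *: z) = c *: rsubmx z.
Proof. by apply/rowP => i; rewrite !mxE. Qed.

Lemma ev_nonzero k (a : nat -> 'rV[R]_k) d : dir_tends a d -> enorm d = 1 ->
  exists N, forall m, (N <= m)%N -> a m != 0.
Proof.
move=> /dir_tendsP H d1; have [N HN] := cv0_small H ltr01.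
exists N => m Nm; apply/eqP => am; have := HN m Nm.
by rewrite am scaler0 sub0r enormN d1 ltxx.
Qed.

Lemma neg2 k (a b : nat -> 'rV[R]_k) : (exists N, forall m, (N <= m)%N -> a m != 0) ->
  Defs.negligible (fun m => a m - b m) a -> Defs.negligible (fun m => a m - b m) b.
Proof.
move=> Ha /negligibleP H; apply/negligibleP.
have h2 : 0 < 1/2 :> R by [].
have [N1 HN1] := cv0_small H h2.
apply: (cv0_le (v := fun m => 2 * (enorm (a m - b m) / enorm (a m)))); last exact: cv0Z.
have [N HN] := ev_and Ha (ex_intro _ N1 HN1).
exists N => m Nm; have [am rm] := HN m Nm.
set D := enorm (a m - b m) in rm *; set A := enorm (a m); set B := enorm (b m).
have A0 : 0 < A by apply: enorm_gt0; apply/eqP.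
have D0 : 0 <= D by apply: enorm_ge0.
have BA : A - D <= B.
  by have := enorm_revtri (a m) (a m - b m); rewrite subKr.
have rD : D < A / 2.
  by move: rm; rewrite ltr_pdivrMr // mul1r mulrC.
have B0 : 0 < B by lra.
rewrite !ger0_norm ?mulr_ge0 ?divr_ge0 ?enorm_ge0 //.
- rewrite ler_pdivrMr //.
  have -> : 2 * (D / A) * B = (2 * D * B) / A by rewrite mulrA mulrAC.
  rewrite ler_pdivlMr //.
  nra.
- by rewrite invr_ge0 ltW.
- by rewrite invr_ge0 ltW.
Qed.

End L7.

Section L8.
Variable R : realType.

Lemma graph_inv k (h : 'rV[R]_k -> 'rV[R]_k) (z : nat -> 'rV[R]_(k + k)) :
  (forall i, graph h (z i)) -> exists x : nat -> 'rV[R]_k, forall i, z i = row_mx (x i) (h (x i)).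
Proof.
move=> H.
have H' : forall i, exists x, row_mx x (h x) = z i by move=> i; have [x _ E] := H i; exists x.
have [x Hx] := choice H'.
by exists x => i; rewrite (Hx i).
Qed.

Lemma pos_scale k (a : nat -> 'rV[R]_k) : tends0 a ->
  exists s : nat -> R, [/\ forall m, 0 < s m, cv0 s &
    forall m, a m != 0 -> s m = enorm (a m)].
Proof.
move=> /tends0P Ha.
exists (fun m => if a m == 0 then (m.+1%:R)^-1 else enorm (a m)); split.
- move=> m; case: eqP => am; first by rewrite invr_gt0.
  by apply: enorm_gt0.
- apply: (cv0_le' (v := fun m => enorm (a m) + 1 / m.+1%:R)); last first.
    exact: cv0D Ha (cv0_inv_nat 1).
  move=> m; have h1 : 0 <= 1 / m.+1%:R :> R by rewrite divr_ge0.
  rewrite [X in _ <= X]ger0_norm ?addr_ge0 ?enorm_ge0 //.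
  case: eqP => am.
    by rewrite am enorm0 add0r mul1r ger0_norm ?invr_ge0 // -(mul1r (_^-1)).
  by rewrite ger0_norm ?enorm_ge0 // lerDl.
- by move=> m /negPf ->.
Qed.

Lemma DD_SSP k (h : 'rV[R]_k -> 'rV[R]_k) r K : Lip h r K -> DD h -> SSP (graph h).
Proof.
move=> HL HD a Ha [d [d1 [z [Hz [Hz0 Hzd]]]] Had].
have [x Hx] := graph_inv (fun i => (Hz i).1).
pose s i := enorm (z i).
have s0 : forall i, 0 < s i by move=> i; apply: enorm_gt0; exact: (Hz i).2.
move/tends0P: Hz0 => Hs.
move/dir_tendsP: Hzd => Hzd.
set p := lsubmx d; set q := rsubmx d.
have Hxp : vlim (fun i => (s i)^-1 *: x i) p.
  have := vlim_lsub Hzd; apply: vlim_eq; exists 0%N => i _.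
  by rewrite lsubmxZ; congr (_ *: _); rewrite Hx row_mxKl.
have Hhq : vlim (fun i => (s i)^-1 *: h (x i)) q.
  have := vlim_rsub Hzd; apply: vlim_eq; exists 0%N => i _.
  by rewrite rsubmxZ; congr (_ *: _); rewrite Hx row_mxKr.
have Hsp : vlim (fun i => (s i)^-1 *: h (s i *: p)) q.
  have := lip_transfer HL s0 Hs Hxp.
  have E : forall i, s i *: ((s i)^-1 *: x i) = x i.
    by move=> i; rewrite scalerA mulfV ?gt_eqF // scale1r.
  move=> H; have := vlimB Hhq H; rewrite subr0; apply: vlim_eq.
  by exists 0%N => i _; rewrite E opprB addrC subrK.
have [sg [sg0 Hsg Esg]] := pos_scale Ha.
have [N HN] := ev_nonzero Had d1.
move/dir_tendsP: Had => Had.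
have Ha' : vlim (fun m => (sg m)^-1 *: a m) d.
  apply: vlim_eq Had; exists N => m Nm; by rewrite Esg // HN.
pose xa m := lsubmx (a m); pose ya m := rsubmx (a m).
have Hxa : vlim (fun m => (sg m)^-1 *: xa m) p.
  by have := vlim_lsub Ha'; apply: vlim_eq; exists 0%N => m _; rewrite lsubmxZ.
have Hya : vlim (fun m => (sg m)^-1 *: ya m) q.
  by have := vlim_rsub Ha'; apply: vlim_eq; exists 0%N => m _; rewrite rsubmxZ.
have Hq2 : vlim (fun m => (sg m)^-1 *: h (sg m *: p)) q.
  exact: (DD_lim HD s0 sg0 Hs Hsg Hsp).
have Hhx : vlim (fun m => (sg m)^-1 *: h (xa m)) q.
  have := lip_transfer HL sg0 Hsg Hxa.
  have E : forall m, sg m *: ((sg m)^-1 *: xa m) = xa m.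
    by move=> m; rewrite scalerA mulfV ?gt_eqF // scale1r.
  move=> H; have := vlimD Hq2 H; rewrite addr0; apply: vlim_eq.
  by exists 0%N => m _; rewrite E addrC subrK.
have Hdiff : vlim (fun m => (sg m)^-1 *: (ya m - h (xa m))) 0.
  have := vlimB Hya Hhx; rewrite subrr; apply: vlim_eq.
  by exists 0%N => m _; rewrite scalerBr.
exists (fun m => row_mx (xa m) (h (xa m))).
have Eab : forall m, a m - row_mx (xa m) (h (xa m)) = row_mx 0 (ya m - h (xa m)).
  by move=> m; rewrite -{1}(hsubmxK (a m)) opp_row_mx add_row_mx subrr.
have neg1 : Defs.negligible (fun m => a m - row_mx (xa m) (h (xa m))) a.
  apply/negligibleP; move/vlim_cv0: Hdiff; apply: cv0_eq.
  exists N => m Nm; rewrite Eab enorm_row_mx0 enormZ -Esg ?HN //.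
  by rewrite ger0_norm ?invr_ge0 ?ltW // mulrC.
split; first by move=> m; exists (xa m).
split => //; apply: neg2 => //; by exists N.
Qed.

End L8.

Section L9.
Variable R : realType.

Lemma lip_ray_bounded k (h : 'rV[R]_k -> 'rV[R]_k) r K v (s : nat -> R) :
  Lip h r K -> (forall m, 0 < s m) -> cv0 s ->
  exists M, forall m, enorm ((s m)^-1 *: h (s m *: v)) <= M.
Proof.
move=> [h0 r0 K0 HL] s0 Hs; apply: ev_bounded.
have [N HN] := cv0_small (cv0Z (enorm v) Hs) r0.
exists N, (K * enorm v) => m Nm.
have sm := s0 m.
have H1 : enorm (s m *: v) < r.
  by rewrite enormZ (ger0_norm (ltW sm)) mulrC; apply: HN.
have H0 : enorm (0 : 'rV[R]_k) < r by rewrite enorm0.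
have := HL _ _ H1 H0; rewrite h0 !subr0 enormZ (ger0_norm (ltW sm)) => H.
rewrite enormZ ger0_norm ?invr_ge0 ?(ltW sm) //.
rewrite ler_pdivrMl //; apply: le_trans H _.
by rewrite mulrCA.
Qed.

Lemma scale_row k1 k2 (c : R) (x : 'rV[R]_k1) (y : 'rV[R]_k2) :
  c *: row_mx x y = row_mx (c *: x) (c *: y).
Proof. exact: scale_row_mx. Qed.

Lemma enorm_normalize k (c : 'rV[R]_k) : c != 0 -> enorm ((enorm c)^-1 *: c) = 1.
Proof.
move=> c0; have n0 : 0 < enorm c by apply: enorm_gt0; apply/eqP.
by rewrite enormZ ger0_norm ?invr_ge0 ?ltW // mulVf ?gt_eqF.
Qed.

Lemma SSP_DD k (h : 'rV[R]_k -> 'rV[R]_k) r K : Lip h r K -> SSP (graph h) -> DD h.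
Proof.
move=> HL HS v s t s0 t0 Hs Ht.
have [h0 _ _ _] := HL.
case: (pselect (vlim (fun m => (s m)^-1 *: h (s m *: v) - (t m)^-1 *: h (t m *: v)) 0)) => // nD.
exfalso.
have [v0|vn0] := eqVneq v 0.
  apply: nD; rewrite v0; apply: vlim_eq (vlim_cst 0).
  by exists 0%N => m _; rewrite !scaler0 h0 !scaler0 subrr.
have [e [e0 [f [Hf He]]]] := not_cv0 nD.
have [M1 HM1] := lip_ray_bounded v HL s0 Hs.
have [g [w1 [Hg Hw1]]] := @bw_vec R k (fun m => (s (f m))^-1 *: h (s (f m) *: v)) M1 (fun m => HM1 _).
have [M2 HM2] := lip_ray_bounded v HL t0 Ht.
have [g2 [w2 [Hg2 Hw2]]] := @bw_vec R k (fun m => (t (f (g m)))^-1 *: h (t (f (g m)) *: v)) M2 (fun m => HM2 _).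
pose phi := f \o g \o g2.
have Hphi : incr phi by apply: incr_comp => //; apply: incr_comp.
pose S m := s (phi m); pose T m := t (phi m).
have S0 : forall m, 0 < S m by move=> m; apply: s0.
have T0 : forall m, 0 < T m by move=> m; apply: t0.
have HSc : cv0 S by apply: cv0_sub.
have HTc : cv0 T by apply: cv0_sub.
have HW1 : vlim (fun m => (S m)^-1 *: h (S m *: v)) w1 := vlim_sub Hg2 Hw1.
have HW2 : vlim (fun m => (T m)^-1 *: h (T m *: v)) w2 := Hw2.
have ew : e <= enorm (w1 - w2).
  apply: (vlim_ge (vlimB HW1 HW2)); exists 0%N => m _.
  by have := He (g (g2 m)); rewrite subr0 ger0_norm ?enorm_ge0.
pose c1 := row_mx v w1.
have c10 : c1 != 0.
  by apply: contra vn0 => /eqP c0; rewrite -(row_mxKl v w1) -/c1 c0 linear0.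
pose d := (enorm c1)^-1 *: c1.
pose C m := row_mx v ((S m)^-1 *: h (S m *: v)).
have HC : vlim C c1 by apply: vlim_row_mx => //; apply: vlim_cst.
have Dd : Dir (graph h) d.
  split; first exact: enorm_normalize.
  exists (fun m => S m *: C m); have [H1 H2] := ray S0 HSc HC c10; split => //.
  move=> m; split.
    exists (S m *: v) => //.
    by rewrite /C scale_row scalerA mulfV ?gt_eqF // scale1r.
  move=> /eqP; apply/negP; rewrite scaler_eq0 negb_or gt_eqF //=.
  apply: contra vn0 => /eqP E; by rewrite -(row_mxKl v ((S m)^-1 *: h (S m *: v))) -/(C m) E linear0.
pose a m := T m *: c1.
have [Ha1 Ha2] := ray T0 HTc (vlim_cst c1) c10.
have [b [Hb [Hab _]]] := HS a Ha1 (ex_intro2 _ _ d Dd Ha2).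
have [x Hx] := graph_inv Hb.
have n0 : 0 < enorm c1 by apply: enorm_gt0; apply/eqP.
have Hab' : vlim (fun m => (T m)^-1 *: (a m - b m)) 0.
  apply/vlim_cv0; move/negligibleP: Hab => Hab.
  apply: (cv0_eq (v := fun m => enorm c1 * (enorm (a m - b m) / enorm (a m)))); last first.
    exact: cv0Z.
  exists 0%N => m _; rewrite /a enormZ (ger0_norm (ltW (T0 m))) enormZ.
  rewrite ger0_norm ?invr_ge0 ?(ltW (T0 m)) // invfM.
  by field; rewrite !gt_eqF.
have E1 : forall m, (T m)^-1 *: (a m - b m) =
    row_mx (v - (T m)^-1 *: x m) (w1 - (T m)^-1 *: h (x m)).
  move=> m; rewrite /a Hx -/c1 scalerBr scalerA mulVf ?gt_eqF // scale1r.
  by rewrite scale_row opp_row_mx add_row_mx.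
have Hxv : vlim (fun m => (T m)^-1 *: x m) v.
  have := vlimB (vlim_cst v) (vlim_lsub Hab'); rewrite linear0 subr0.
  by apply: vlim_eq; exists 0%N => m _; rewrite E1 row_mxKl opprB addrC subrK.
have Hhw : vlim (fun m => (T m)^-1 *: h (x m)) w1.
  have := vlimB (vlim_cst w1) (vlim_rsub Hab'); rewrite linear0 subr0.
  by apply: vlim_eq; exists 0%N => m _; rewrite E1 row_mxKr opprB addrC subrK.
have HT1 : vlim (fun m => (T m)^-1 *: h (T m *: v)) w1.
  have := vlimB Hhw (lip_transfer HL T0 HTc Hxv); rewrite subr0.
  apply: vlim_eq; exists 0%N => m _.
  by rewrite scalerA mulfV ?gt_eqF // scale1r opprB addrC subrK.
have := vlim_uniq HT1 HW2 => E12.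
by move: ew; rewrite E12 subrr enorm0 leNgt e0.
Qed.

End L9.

Section L10.
Variable R : realType.

Lemma prod_mapE n1 n2 (h1 : 'rV[R]_n1 -> 'rV[R]_n1) (h2 : 'rV[R]_n2 -> 'rV[R]_n2) z :
  prod_map h1 h2 z = row_mx (h1 (lsubmx z)) (h2 (rsubmx z)).
Proof. by []. Qed.

Lemma prod_ray n1 n2 (h1 : 'rV[R]_n1 -> 'rV[R]_n1) (h2 : 'rV[R]_n2 -> 'rV[R]_n2) (c : R) z :
  c^-1 *: prod_map h1 h2 (c *: z) =
  row_mx (c^-1 *: h1 (c *: lsubmx z)) (c^-1 *: h2 (c *: rsubmx z)).
Proof. by rewrite prod_mapE scale_row lsubmxZ rsubmxZ. Qed.

Lemma DD_prod n1 n2 (h1 : 'rV[R]_n1 -> 'rV[R]_n1) (h2 : 'rV[R]_n2 -> 'rV[R]_n2) :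
  h1 0 = 0 -> h2 0 = 0 -> (DD (prod_map h1 h2) <-> DD h1 /\ DD h2).
Proof.
move=> h10 h20; split.
- move=> HD; split => v s t s0 t0 Hs Ht.
  + have := vlim_lsub (HD (row_mx v 0) s t s0 t0 Hs Ht); rewrite linear0.
    apply: vlim_eq; exists 0%N => m _.
    by rewrite linearB /= !prod_ray !row_mxKl.
  + have := vlim_rsub (HD (row_mx 0 v) s t s0 t0 Hs Ht); rewrite linear0.
    apply: vlim_eq; exists 0%N => m _.
    by rewrite linearB /= !prod_ray !row_mxKr.
- move=> [H1 H2] v s t s0 t0 Hs Ht.
  have := vlim_row_mx (H1 (lsubmx v) s t s0 t0 Hs Ht) (H2 (rsubmx v) s t s0 t0 Hs Ht).
  rewrite row_mx0; apply: vlim_eq; exists 0%N => m _.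
  by rewrite !prod_ray opp_row_mx add_row_mx.
Qed.

Lemma DD_id k : DD (@id 'rV[R]_k).
Proof.
move=> v s t s0 t0 _ _; apply: vlim_eq (vlim_cst 0); exists 0%N => m _ /=.
by rewrite !scalerA !mulVf ?gt_eqF // !scale1r subrr.
Qed.

Lemma prod0 n1 n2 (h1 : 'rV[R]_n1 -> 'rV[R]_n1) (h2 : 'rV[R]_n2 -> 'rV[R]_n2) :
  h1 0 = 0 -> h2 0 = 0 -> prod_map h1 h2 0 = 0.
Proof. by move=> h10 h20; rewrite prod_mapE !linear0 h10 h20 row_mx0. Qed.

Lemma prod_diff n1 n2 (h1 : 'rV[R]_n1 -> 'rV[R]_n1) (h2 : 'rV[R]_n2 -> 'rV[R]_n2) x y :
  prod_map h1 h2 x - prod_map h1 h2 y =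
  row_mx (h1 (lsubmx x) - h1 (lsubmx y)) (h2 (rsubmx x) - h2 (rsubmx y)).
Proof. by rewrite !prod_mapE opp_row_mx add_row_mx. Qed.

Lemma enorm_split n1 n2 (x : 'rV[R]_(n1 + n2)) :
  enorm x ^+ 2 = enorm (lsubmx x) ^+ 2 + enorm (rsubmx x) ^+ 2.
Proof. by rewrite -{1}(hsubmxK x) enorm_row_mx_sq. Qed.

Lemma Lip_prod n1 n2 (h1 : 'rV[R]_n1 -> 'rV[R]_n1) (h2 : 'rV[R]_n2 -> 'rV[R]_n2) r1 r2 K1 K2 :
  Lip h1 r1 K1 -> Lip h2 r2 K2 -> Lip (prod_map h1 h2) (Num.min r1 r2) (K1 + K2).
Proof.
move=> [h10 r10 K10 H1] [h20 r20 K20 H2]; split.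
- exact: prod0.
- by rewrite lt_min r10 r20.
- exact: addr_ge0.
move=> x y; rewrite !lt_min => /andP[x1 x2] /andP[y1 y2].
rewrite prod_diff; apply: le_trans (enorm_row_mx_le _ _) _.
have L1 := H1 _ _ (le_lt_trans (enorm_lsub x) x1) (le_lt_trans (enorm_lsub y) y1).
have L2 := H2 _ _ (le_lt_trans (enorm_rsub x) x2) (le_lt_trans (enorm_rsub y) y2).
have e1 : enorm (lsubmx x - lsubmx y) <= enorm (x - y) by rewrite -linearB; apply: enorm_lsub.
have e2 : enorm (rsubmx x - rsubmx y) <= enorm (x - y) by rewrite -linearB; apply: enorm_rsub.
have := ler_wpM2l K10 e1; have := ler_wpM2l K20 e2; lra.
Qed.

Lemma Lip_id k r : 0 < r -> Lip (@id 'rV[R]_k) r 1.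
Proof. by move=> r0; split => // x y _ _; rewrite mul1r. Qed.

Definition BL (k : nat) (g : 'rV[R]_k -> 'rV[R]_k) (r K1 K2 : R) :=
  [/\ g 0 = 0, 0 < r, 0 < K1, K1 <= K2 &
    forall x y, enorm x < r -> enorm y < r ->
      K1 * enorm (x - y) <= enorm (g x - g y) <= K2 * enorm (x - y)].

Lemma bilipP k (g : 'rV[R]_k -> 'rV[R]_k) : bilipschitz g <-> exists r K1 K2, BL g r K1 K2.
Proof.
split.
- by move=> [g0 [r [K1 [K2 [r0 K10 K12 H]]]]]; exists r, K1, K2; split.
- by move=> [r [K1 [K2 [g0 r0 K10 K12 H]]]]; split => //; exists r, K1, K2; split.
Qed.

Lemma BL_Lip k (g : 'rV[R]_k -> 'rV[R]_k) r K1 K2 : BL g r K1 K2 -> Lip g r K2.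
Proof.
move=> [g0 r0 K10 K12 H]; split => //; first by apply: le_trans K12; apply: ltW.
by move=> x y xr yr; have /andP[] := H x y xr yr.
Qed.

Lemma sq_le (x y : R) : 0 <= x -> x <= y -> x ^+ 2 <= y ^+ 2.
Proof. move=> x0 xy; nra. Qed.

Lemma BL_prod n1 n2 (h1 : 'rV[R]_n1 -> 'rV[R]_n1) (h2 : 'rV[R]_n2 -> 'rV[R]_n2) r1 r2 a1 a2 b1 b2 :
  BL h1 r1 a1 b1 -> BL h2 r2 a2 b2 ->
  BL (prod_map h1 h2) (Num.min r1 r2) (Num.min a1 a2) (Num.max b1 b2).
Proof.
move=> [h10 r10 a10 ab1 H1] [h20 r20 a20 ab2 H2]; split.
- exact: prod0.
- by rewrite lt_min r10 r20.
- by rewrite lt_min a10 a20.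
- by apply: (@le_trans _ _ a1); [rewrite ge_min lexx | rewrite le_max ab1].
move=> x y; rewrite !lt_min => /andP[x1 x2] /andP[y1 y2].
have /andP[L1 U1] := H1 _ _ (le_lt_trans (enorm_lsub x) x1) (le_lt_trans (enorm_lsub y) y1).
have /andP[L2 U2] := H2 _ _ (le_lt_trans (enorm_rsub x) x2) (le_lt_trans (enorm_rsub y) y2).
rewrite prod_diff.
have Es := enorm_split (x - y); rewrite !linearB /= in Es.
have Er := enorm_row_mx_sq (h1 (lsubmx x) - h1 (lsubmx y)) (h2 (rsubmx x) - h2 (rsubmx y)).
set e1 := enorm (lsubmx x - lsubmx y) in Es L1 U1 *.
set e2 := enorm (rsubmx x - rsubmx y) in Es L2 U2 *.
set A := enorm (h1 (lsubmx x) - h1 (lsubmx y)) in Er L1 U1 *.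
set B := enorm (h2 (rsubmx x) - h2 (rsubmx y)) in Er L2 U2 *.
set E := enorm (x - y) in Es *.
set W := enorm (row_mx _ _) in Er *.
have e10 : 0 <= e1 by apply: enorm_ge0.
have e20 : 0 <= e2 by apply: enorm_ge0.
have E0 : 0 <= E by apply: enorm_ge0.
have W0 : 0 <= W by apply: enorm_ge0.
set m := Num.min a1 a2; set M := Num.max b1 b2.
have m0 : 0 < m by rewrite lt_min a10 a20.
have m1 : m <= a1 by rewrite ge_min lexx.
have m2 : m <= a2 by rewrite ge_min lexx orbT.
have M1 : b1 <= M by rewrite le_max lexx.
have M2 : b2 <= M by rewrite le_max lexx orbT.
have s1 : (m * e1) ^+ 2 <= A ^+ 2.
  apply: sq_le; first exact: mulr_ge0 (ltW m0) e10.
  by apply: le_trans L1; apply: ler_wpM2r.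
have s2 : (m * e2) ^+ 2 <= B ^+ 2.
  apply: sq_le; first exact: mulr_ge0 (ltW m0) e20.
  by apply: le_trans L2; apply: ler_wpM2r.
have M0 : 0 <= M by apply: le_trans M1; apply: le_trans ab1; apply: ltW.
have t1 : A ^+ 2 <= (M * e1) ^+ 2.
  apply: sq_le; first exact: enorm_ge0.
  by apply: le_trans U1 _; apply: ler_wpM2r.
have t2 : B ^+ 2 <= (M * e2) ^+ 2.
  apply: sq_le; first exact: enorm_ge0.
  by apply: le_trans U2 _; apply: ler_wpM2r.
apply/andP; split.
- apply: le_sq_enorm => //; rewrite Er exprMn Es mulrDr -!exprMn; lra.
- apply: le_sq_enorm; first exact: mulr_ge0.
  rewrite Er exprMn Es mulrDr -!exprMn; lra.
Qed.

Lemma BL_fst n1 n2 (h1 : 'rV[R]_n1 -> 'rV[R]_n1) (h2 : 'rV[R]_n2 -> 'rV[R]_n2) r a b :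
  h2 0 = 0 -> BL (prod_map h1 h2) r a b -> BL h1 r a b.
Proof.
move=> h20 [p0 r0 a0 ab H]; split => //.
- by have := congr1 lsubmx p0; rewrite prod_mapE row_mxKl !linear0.
move=> x y xr yr.
have := H (row_mx x 0) (row_mx y 0); rewrite !enorm_row_mx0r => /(_ xr yr).
by rewrite prod_diff !row_mxKl !row_mxKr subrr opp_row_mx add_row_mx subrr !enorm_row_mx0r.
Qed.

Lemma BL_snd n1 n2 (h1 : 'rV[R]_n1 -> 'rV[R]_n1) (h2 : 'rV[R]_n2 -> 'rV[R]_n2) r a b :
  h1 0 = 0 -> BL (prod_map h1 h2) r a b -> BL h2 r a b.
Proof.
move=> h10 [p0 r0 a0 ab H]; split => //.
- by have := congr1 rsubmx p0; rewrite prod_mapE row_mxKr !linear0.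
move=> x y xr yr.
have := H (row_mx 0 x) (row_mx 0 y); rewrite !enorm_row_mx0 => /(_ xr yr).
by rewrite prod_diff !row_mxKl !row_mxKr subrr opp_row_mx add_row_mx subrr !enorm_row_mx0.
Qed.

End L10.

Section L11.
Variable R : realType.

Lemma ray_dir k (A : set 'rV[R]_k) (S : nat -> R) (C : nat -> 'rV[R]_k) c :
  (forall m, 0 < S m) -> cv0 S -> vlim C c -> c != 0 -> (forall m, C m != 0) ->
  (forall m, A (S m *: C m)) -> Dir A ((enorm c)^-1 *: c).
Proof.
move=> S0 HS HC c0 C0 HA; split; first exact: enorm_normalize.
have [H1 H2] := ray S0 HS HC c0.
exists (fun m => S m *: C m); split => // m; split => //.
by move=> /eqP; apply/negP; rewrite scaler_eq0 negb_or gt_eqF //= C0.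
Qed.

Lemma prod_id_scale n (g : 'rV[R]_n -> 'rV[R]_n) (t : R) (a : 'rV[R]_(n + n)) : 0 < t ->
  prod_map id g (t *: a) = t *: row_mx (lsubmx a) (t^-1 *: g (t *: rsubmx a)).
Proof.
move=> t0; rewrite prod_mapE lsubmxZ rsubmxZ scale_row scalerA mulfV ?gt_eqF //.
by rewrite scale1r.
Qed.

Lemma normalize_inj n (v w1 w2 : 'rV[R]_n) : v != 0 ->
  (enorm (row_mx v w1))^-1 *: row_mx v w1 = (enorm (row_mx v w2))^-1 *: row_mx v w2 ->
  w1 = w2.
Proof.
move=> v0 E.
have n1 : 0 < enorm (row_mx v w1).
  by apply: enorm_gt0 => /eqP; apply/negP; apply: contra v0 => /eqP E1; rewrite -(row_mxKl v w1) E1 linear0.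
have n2 : 0 < enorm (row_mx v w2).
  by apply: enorm_gt0 => /eqP; apply/negP; apply: contra v0 => /eqP E1; rewrite -(row_mxKl v w2) E1 linear0.
have El := congr1 lsubmx E; rewrite !lsubmxZ !row_mxKl in El.
have Er := congr1 rsubmx E; rewrite !rsubmxZ !row_mxKr in Er.
have Ei : (enorm (row_mx v w1))^-1 = (enorm (row_mx v w2))^-1.
  apply/eqP; rewrite -subr_eq0; apply/eqP.
  have : ((enorm (row_mx v w1))^-1 - (enorm (row_mx v w2))^-1) *: v = 0.
    by rewrite scalerBl El subrr.
  by move/eqP; rewrite scaler_eq0 (negPf v0) orbF => /eqP.
rewrite Ei in Er; apply: (scalerI _ Er).
by rewrite invr_eq0 gt_eqF.
Qed.

End L11.

Section L12.
Variable R : realType.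

Lemma semiline_DD n (g : 'rV[R]_n -> 'rV[R]_n) r K :
  Lip g r K -> semiline_SSP (prod_map (@id 'rV[R]_n) g) -> DD g.
Proof.
move=> HL [r0 r00 Hsl] v s t s0 t0 Hs Ht.
have [g0 _ _ _] := HL.
case: (pselect (vlim (fun m => (s m)^-1 *: g (s m *: v) - (t m)^-1 *: g (t m *: v)) 0)) => // nD.
exfalso.
have [v0|vn0] := eqVneq v 0.
  apply: nD; rewrite v0; apply: vlim_eq (vlim_cst 0).
  by exists 0%N => m _; rewrite !scaler0 g0 !scaler0 subrr.
set L := enorm (row_mx v v).
have L0 : 0 < L.
  apply: enorm_gt0 => /eqP; apply/negP; apply: contra vn0 => /eqP E1.
  by rewrite -(row_mxKl v v) E1 linear0.
have [e [e0 [f0 [Hf0 He0]]]] := not_cv0 nD.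
have [N HN] := ev_and (cv0_small (cv0Z L (cv0_sub Hf0 Hs)) r00)
                      (cv0_small (cv0Z L (cv0_sub Hf0 Ht)) r00).
pose f m := f0 (m + N)%N.
have Hf : incr f by move=> m; rewrite /f addSn; apply: Hf0.
have He : forall m, e <= `|enorm ((s (f m))^-1 *: g (s (f m) *: v) - (t (f m))^-1 *: g (t (f m) *: v) - 0)|.
  by move=> m; apply: He0.
have Hsm : forall m, L * s (f m) < r0 by move=> m; exact: (HN (m + N)%N (leq_addl _ _)).1.
have Htm : forall m, L * t (f m) < r0 by move=> m; exact: (HN (m + N)%N (leq_addl _ _)).2.
have [M1 HM1] := lip_ray_bounded v HL s0 Hs.
have [g1 [w1 [Hg1 Hw1]]] := @bw_vec R n (fun m => (s (f m))^-1 *: g (s (f m) *: v)) M1 (fun m => HM1 _).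
have [M2 HM2] := lip_ray_bounded v HL t0 Ht.
have [g2 [w2 [Hg2 Hw2]]] := @bw_vec R n (fun m => (t (f (g1 m)))^-1 *: g (t (f (g1 m)) *: v)) M2 (fun m => HM2 _).
pose phi := f \o g1 \o g2.
have Hphi : incr phi by apply: incr_comp => //; apply: incr_comp.
pose S m := s (phi m); pose T m := t (phi m).
have S0 : forall m, 0 < S m by move=> m; apply: s0.
have T0 : forall m, 0 < T m by move=> m; apply: t0.
have HSc : cv0 S by apply: cv0_sub.
have HTc : cv0 T by apply: cv0_sub.
have HW1 : vlim (fun m => (S m)^-1 *: g (S m *: v)) w1 := vlim_sub Hg2 Hw1.
have HW2 : vlim (fun m => (T m)^-1 *: g (T m *: v)) w2 := Hw2.
have ew : e <= enorm (w1 - w2).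
  apply: (vlim_ge (vlimB HW1 HW2)); exists 0%N => m _.
  by have := He (g1 (g2 m)); rewrite subr0 ger0_norm ?enorm_ge0.
pose a := L^-1 *: row_mx v v.
have a1 : enorm a = 1 by apply: enorm_normalize; apply/eqP => E; move: L0; rewrite /L E enorm0 ltxx.
have [d Hd] := Hsl r0 r00 (lexx _) a a1.
pose A := [set prod_map (@id 'rV[R]_n) g x | x in semiline a `&` eball0 r0].
change (Dir A = [set d]) in Hd.
have inA : forall U : R, 0 < U -> L * U < r0 ->
    A (U *: row_mx v (U^-1 *: g (U *: v))).
  move=> U U0 LU; exists ((L * U) *: a).
    split.
      by exists (L * U) => //; apply: mulr_ge0; apply: ltW.
    by rewrite /eball0 /= enormZ a1 mulr1 ger0_norm //; apply: mulr_ge0; apply: ltW.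
  rewrite /a scalerA mulrAC mulfV ?gt_eqF // mul1r.
  by rewrite prod_mapE lsubmxZ rsubmxZ row_mxKl row_mxKr scale_row scalerA mulfV ?gt_eqF // scale1r.
have rnz : forall w : 'rV[R]_n, row_mx v w != 0.
  by move=> w; apply: contra vn0 => /eqP E1; rewrite -(row_mxKl v w) E1 linear0.
have D1 : Dir A ((enorm (row_mx v w1))^-1 *: row_mx v w1).
  apply: (ray_dir (C := fun m => row_mx v ((S m)^-1 *: g (S m *: v)))) S0 HSc _ (rnz _) _ _.
  - by apply: vlim_row_mx => //; apply: vlim_cst.
  - by move=> m; apply: rnz.
  - by move=> m; apply: inA; [exact: s0 | exact: (Hsm (g1 (g2 m)))].
have D2 : Dir A ((enorm (row_mx v w2))^-1 *: row_mx v w2).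
  apply: (ray_dir (C := fun m => row_mx v ((T m)^-1 *: g (T m *: v)))) T0 HTc _ (rnz _) _ _.
  - by apply: vlim_row_mx => //; apply: vlim_cst.
  - by move=> m; apply: rnz.
  - by move=> m; apply: inA; [exact: t0 | exact: (Htm (g1 (g2 m)))].
rewrite Hd in D1 D2.
have E12 := normalize_inj vn0 (etrans D1 (esym D2)).
by move: ew; rewrite E12 subrr enorm0 leNgt e0.
Qed.

End L12.

Section L13.
Variable R : realType.

Lemma kappa_bound n (g : 'rV[R]_n -> 'rV[R]_n) r K1 K2 (a : 'rV[R]_(n + n)) (t : R) :
  BL g r K1 K2 -> enorm a = 1 -> 0 < t -> t < r ->
  Num.min 1 K1 <= enorm (row_mx (lsubmx a) (t^-1 *: g (t *: rsubmx a))).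
Proof.
move=> [g0 r0 K10 K12 H] a1 t0 tr.
have ra : enorm (rsubmx a) <= 1 by rewrite -a1; apply: enorm_rsub.
have H1 : enorm (t *: rsubmx a) < r.
  rewrite enormZ (ger0_norm (ltW t0)); apply: le_lt_trans tr.
  by rewrite -{2}(mulr1 t) ler_wpM2l // ltW.
have H0 : enorm (0 : 'rV[R]_n) < r by rewrite enorm0; apply: le_lt_trans tr; apply: ltW.
have /andP[L _] := H _ _ H1 H0; rewrite g0 !subr0 enormZ (ger0_norm (ltW t0)) in L.
have Lg : K1 * enorm (rsubmx a) <= enorm (t^-1 *: g (t *: rsubmx a)).
  rewrite enormZ ger0_norm ?invr_ge0 ?(ltW t0) // ler_pdivlMl //.
  by rewrite mulrCA.
have Es := enorm_split a; rewrite a1 expr1n in Es.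
set k := Num.min 1 K1.
have k0 : 0 < k by rewrite lt_min ltr01 K10.
have k1 : k <= 1 by rewrite ge_min lexx.
have kK : k <= K1 by rewrite ge_min lexx orbT.
apply: le_sq_enorm; first exact: enorm_ge0.
rewrite enorm_row_mx_sq.
set x := enorm (lsubmx a) in Es *; set y := enorm (rsubmx a) in Es Lg *.
set z := enorm (t^-1 *: _) in Lg *.
have x0 : 0 <= x by apply: enorm_ge0.
have y0 : 0 <= y by apply: enorm_ge0.
have s1 : (k * y) ^+ 2 <= z ^+ 2.
  apply: sq_le; first by apply: mulr_ge0 => //; apply: ltW.
  by apply: le_trans Lg; apply: ler_wpM2r.
have s2 : k ^+ 2 * x ^+ 2 <= x ^+ 2.
  have : k ^+ 2 <= 1 by rewrite -(expr1n _ 2); apply: sq_le => //; apply: ltW.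
  by move=> kk; rewrite -{2}(mul1r (x ^+ 2)); apply: ler_wpM2r => //; apply: sqr_ge0.
have : k ^+ 2 = k ^+ 2 * (x ^+ 2 + y ^+ 2) by rewrite -Es mulr1.
rewrite exprMn in s1; lra.
Qed.

Lemma DD_semiline n (g : 'rV[R]_n -> 'rV[R]_n) r K1 K2 :
  BL g r K1 K2 -> DD g -> semiline_SSP (prod_map (@id 'rV[R]_n) g).
Proof.
move=> HB HD; have HL := BL_Lip HB; have [g0 r0 K10 K12 HBL] := HB.
exists r => // r' r'0 r'r a a1.
set a1' := lsubmx a; set a2 := rsubmx a.
pose s m := r' / 2 / m.+1%:R.
have s0 : forall m, 0 < s m by move=> m; rewrite /s !divr_gt0.
have Hs : cv0 s by apply: cv0_inv_nat.
have sr : forall m, s m < r'.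
  move=> m; apply: (@le_lt_trans _ _ (r' / 2)); last lra.
  rewrite /s ler_pdivrMr ?ltr0Sn //; apply: ler_peMr; last by rewrite ler1n.
  by apply: divr_ge0 => //; apply: ltW.
have [M HM] := lip_ray_bounded a2 HL s0 Hs.
have [phi [w [Hphi Hw]]] := @bw_vec R n (fun m => (s m)^-1 *: g (s m *: a2)) M HM.
pose sg m := s (phi m).
have sg0 : forall m, 0 < sg m by move=> m; apply: s0.
have Hsg : cv0 sg by apply: cv0_sub.
have Lt : forall tau : nat -> R, (forall m, 0 < tau m) -> cv0 tau ->
    vlim (fun m => (tau m)^-1 *: g (tau m *: a2)) w.
  by move=> tau tau0 Htau; apply: (DD_lim HD sg0 tau0 Hsg Htau Hw).
pose c := row_mx a1' w.
set k := Num.min 1 K1.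
have k0 : 0 < k by rewrite lt_min ltr01 K10.
have kb : forall t, 0 < t -> t < r' ->
    k <= enorm (row_mx a1' (t^-1 *: g (t *: a2))).
  move=> t t0 tr; apply: (kappa_bound HB a1 t0); exact: lt_le_trans tr r'r.
have HC : vlim (fun m => row_mx a1' ((sg m)^-1 *: g (sg m *: a2))) c.
  by apply: vlim_row_mx; [apply: vlim_cst | apply: Lt].
have kc : k <= enorm c.
  apply: (vlim_ge HC); exists 0%N => m _; apply: kb => //; exact: sr.
have c0 : c != 0.
  by apply/eqP => E; move: kc; rewrite E enorm0 => /(lt_le_trans k0); rewrite ltxx.
exists ((enorm c)^-1 *: c).
pose A := [set prod_map (@id 'rV[R]_n) g x | x in semiline a `&` eball0 r'].
change (Dir A = [set (enorm c)^-1 *: c]).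
apply/seteqP; split => e.
- move=> [e1 [x [Hx [Hx0 Hxd]]]].
  have Ht : forall i, exists t, [/\ 0 < t, t < r' & x i = prod_map id g (t *: a)].
    move=> i; have [[y [[t t0 Ety] yr] Exy] nx] := Hx i.
    have yr' : enorm y < r' by [].
    rewrite -Ety enormZ a1 mulr1 ger0_norm // in yr'.
    exists t; split => //; last by rewrite -Exy -Ety.
    rewrite lt_neqAle t0 andbT; apply/eqP => t0'; apply: nx.
    by rewrite -Exy -Ety -t0' scale0r prod0.
  have [tau Htau] := choice Ht.
  have tau0 : forall i, 0 < tau i by move=> i; have [] := Htau i.
  have Ex : forall i, x i = tau i *: row_mx a1' ((tau i)^-1 *: g (tau i *: a2)).
    by move=> i; have [t0 _ ->] := Htau i; rewrite prod_id_scale.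
  have Htc : cv0 tau.
    apply: (cv0_le' (v := fun i => k^-1 * enorm (x i))); last first.
      by apply: cv0Z; apply/tends0P.
    move=> i; rewrite !ger0_norm ?mulr_ge0 ?invr_ge0 ?enorm_ge0 ?(ltW (tau0 i)) ?(ltW k0) //.
    rewrite ler_pdivlMl // Ex enormZ (ger0_norm (ltW (tau0 i))) mulrC.
    apply: ler_wpM2l; first exact: ltW.
    by apply: kb => //; have [] := Htau i.
  have HCt : vlim (fun i => row_mx a1' ((tau i)^-1 *: g (tau i *: a2))) c.
    by apply: vlim_row_mx; [apply: vlim_cst | apply: Lt].
  have [_ H2] := ray tau0 Htc HCt c0.
  move/dir_tendsP: Hxd => Hxd; move/dir_tendsP: H2 => H2.
  have : vlim (fun i => (enorm (x i))^-1 *: x i) ((enorm c)^-1 *: c).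
    by apply: vlim_eq H2; exists 0%N => i _; rewrite Ex.
  by move=> H3; rewrite /= (vlim_uniq Hxd H3).
- move=> /= ->.
  apply: (ray_dir sg0 Hsg HC c0).
    move=> m; apply/eqP => E; have := kb (sg m) (sg0 m) (sr _).
    by rewrite E enorm0 => /(lt_le_trans k0); rewrite ltxx.
  move=> m; exists (sg m *: a); last by rewrite prod_id_scale.
  split; first by exists (sg m) => //; apply: ltW.
  by rewrite /eball0 /= enormZ a1 mulr1 ger0_norm ?(ltW (sg0 m)) //; apply: sr.
Qed.

End L13.

Section L14.
Variable R : realType.

Lemma notDD k (g : 'rV[R]_k -> 'rV[R]_k) r K v (s t : nat -> R) :
  Lip g r K -> (forall m, 0 < s m) -> (forall m, 0 < t m) -> cv0 s -> cv0 t ->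
  ~ vlim (fun m => (s m)^-1 *: g (s m *: v) - (t m)^-1 *: g (t m *: v)) 0 ->
  exists e phi w1 w2, [/\ 0 < e, incr phi,
    vlim (fun m => (s (phi m))^-1 *: g (s (phi m) *: v)) w1,
    vlim (fun m => (t (phi m))^-1 *: g (t (phi m) *: v)) w2 & e <= enorm (w1 - w2)].
Proof.
move=> HL s0 t0 Hs Ht nD.
have [e [e0 [f [Hf He]]]] := not_cv0 nD.
have [M1 HM1] := lip_ray_bounded v HL s0 Hs.
have [g1 [w1 [Hg Hw1]]] := @bw_vec R k (fun m => (s (f m))^-1 *: g (s (f m) *: v)) M1 (fun m => HM1 _).
have [M2 HM2] := lip_ray_bounded v HL t0 Ht.
have [g2 [w2 [Hg2 Hw2]]] := @bw_vec R k (fun m => (t (f (g1 m)))^-1 *: g (t (f (g1 m)) *: v)) M2 (fun m => HM2 _).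
have Hphi : incr (f \o g1 \o g2) by apply: incr_comp => //; apply: incr_comp.
exists e, (f \o g1 \o g2), w1, w2; split => //.
- exact: (vlim_sub Hg2 Hw1).
- apply: (vlim_ge (vlimB (vlim_sub Hg2 Hw1) Hw2)); exists 0%N => m _.
  by have := He (g1 (g2 m)); rewrite subr0 ger0_norm ?enorm_ge0.
Qed.

Lemma DD_inv k (f g : 'rV[R]_k -> 'rV[R]_k) r1 a1 b1 r2 K2 rho :
  BL f r1 a1 b1 -> Lip g r2 K2 -> 0 < rho -> (forall y, enorm y < rho -> f (g y) = y) ->
  DD f -> DD g.
Proof.
move=> HB HL rho0 Hfg HD u s t s0 t0 Hs Ht.
have [g0 _ _ _] := HL.
have [f0 r10 a10 _ HBL] := HB.
case: (pselect (vlim (fun m => (s m)^-1 *: g (s m *: u) - (t m)^-1 *: g (t m *: u)) 0)) => // nD.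
exfalso.
have [e [phi [p1 [p2 [e0 Hphi Hp1 Hp2 ep]]]]] := notDD HL s0 t0 Hs Ht nD.
pose S m := s (phi m); pose T m := t (phi m).
have S0 : forall m, 0 < S m by move=> m; apply: s0.
have T0 : forall m, 0 < T m by move=> m; apply: t0.
have HSc : cv0 S by apply: cv0_sub.
have HTc : cv0 T by apply: cv0_sub.
have back : forall (U : nat -> R) p, (forall m, 0 < U m) -> cv0 U ->
    vlim (fun m => (U m)^-1 *: g (U m *: u)) p ->
    vlim (fun m => (U m)^-1 *: f (U m *: p)) u.
  move=> U p U0 HU Hp.
  have := lip_transfer (BL_Lip HB) U0 HU Hp.
  have [N HN] := cv0_small (cv0Z (enorm u) HU) rho0.
  move=> H; have := vlimB (vlim_cst u) H; rewrite subr0; apply: vlim_eq.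
  exists N => m Nm; rewrite scalerA mulfV ?gt_eqF // scale1r Hfg.
    by rewrite scalerA mulVf ?gt_eqF // scale1r opprB addrC subrK.
  by rewrite enormZ ger0_norm ?(ltW (U0 m)) // mulrC; apply: HN.
have H1 : vlim (fun m => (T m)^-1 *: f (T m *: p1)) u.
  exact: (DD_lim HD S0 T0 HSc HTc (back _ _ S0 HSc Hp1)).
have H2 : vlim (fun m => (T m)^-1 *: f (T m *: p2)) u := back _ _ T0 HTc Hp2.
have H3 := vlimB H1 H2; rewrite subrr in H3.
have [N HN] := ev_and (cv0_small (cv0Z (enorm p1) HTc) r10) (cv0_small (cv0Z (enorm p2) HTc) r10).
have : a1 * e <= enorm (0 : 'rV[R]_k).
  apply: (vlim_ge H3); exists N => m Nm; have [Hm1 Hm2] := HN m Nm.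
  have x1 : enorm (T m *: p1) < r1 by rewrite enormZ ger0_norm ?(ltW (T0 m)) // mulrC.
  have x2 : enorm (T m *: p2) < r1 by rewrite enormZ ger0_norm ?(ltW (T0 m)) // mulrC.
  have /andP[L _] := HBL _ _ x1 x2.
  have Ti : 0 <= (T m)^-1 by rewrite invr_ge0; exact: ltW (T0 m).
  rewrite -scalerBr enormZ (ger0_norm Ti).
  rewrite ler_pdivlMl //.
  apply: le_trans L; rewrite -scalerBr enormZ (ger0_norm (ltW (T0 m))).
  rewrite [X in _ <= X]mulrCA; apply: ler_wpM2l; first exact: ltW (T0 m).
  by apply: ler_wpM2l => //; apply: ltW.
by rewrite enorm0 => H; have := mulr_gt0 a10 e0; lra.
Qed.

End L14.

Section L15.
Variable R : realType.

Lemma ball_coord k (x y : 'rV[R]_k) e : ball x e y -> forall i, `|x ord0 i - y ord0 i| < e.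
Proof. move=> [_ H] i. have := H ord0 i. by []. Qed.

Lemma coord_ball k (x y : 'rV[R]_k) e : 0 < e -> (forall i, `|x ord0 i - y ord0 i| < e) -> ball x e y.
Proof. move=> e0 H; split => // i j. rewrite (ord1 i). exact: H. Qed.

Lemma enorm_ball0 k (y : 'rV[R]_k) d : 0 < d -> enorm y < d -> ball (0 : 'rV[R]_k) d y.
Proof.
move=> d0 yd; apply: coord_ball => // i.
by rewrite mxE sub0r normrN; apply: le_lt_trans (coord_le _ _) yd.
Qed.

Lemma ball0_enorm k (y : 'rV[R]_k) e : ball (0 : 'rV[R]_k) e y -> enorm y <= k%:R * e.
Proof.
move=> H; apply: enorm_coord_le => i; apply: ltW.
by have := ball_coord H i; rewrite mxE sub0r normrN.
Qed.

Lemma nbhs0_enorm k (V : set 'rV[R]_k) : nbhs (0 : 'rV[R]_k) V ->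
  exists2 d, 0 < d & forall y, enorm y < d -> V y.
Proof.
move=> /nbhs_ballP [d /= d0 Hd]; exists d => // y yd; apply: Hd.
exact: enorm_ball0.
Qed.

Lemma open0_enorm k (V : set 'rV[R]_k) : open V -> V 0 ->
  exists2 d, 0 < d & forall y, enorm y < d -> V y.
Proof.
move=> oV V0; apply: nbhs0_enorm.
by move: oV; rewrite openE => /(_ _ V0).
Qed.

Lemma cont0_enorm k (g : 'rV[R]_k -> 'rV[R]_k) : g 0 = 0 -> {for 0, continuous g} ->
  forall e, 0 < e -> exists2 d, 0 < d & forall y, enorm y < d -> enorm (g y) < e.
Proof.
move=> g0 Hc e e0.
have k0 : 0 < k%:R + 1 :> R by rewrite ltr_wpDl.
have ep : 0 < e / (k%:R + 1) by rewrite divr_gt0.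
have := Hc _ (nbhsx_ballx (g 0) _ ep); rewrite g0 => /nbhs0_enorm [d d0 Hd].
exists d => // y /Hd /ball0_enorm H; apply: le_lt_trans H _.
by rewrite mulrA ltr_pdivrMr //; lra.
Qed.

Lemma continuous_row k n1 n2 (f1 : 'rV[R]_k -> 'rV[R]_n1) (f2 : 'rV[R]_k -> 'rV[R]_n2) z :
  {for z, continuous f1} -> {for z, continuous f2} ->
  {for z, continuous (fun w => row_mx (f1 w) (f2 w))}.
Proof.
move=> H1 H2 A /nbhs_ballP [e /= e0 He].
have N1 : nbhs z (f1 @^-1` ball (f1 z) e) := H1 _ (nbhsx_ballx (f1 z) _ e0).
have N2 : nbhs z (f2 @^-1` ball (f2 z) e) := H2 _ (nbhsx_ballx (f2 z) _ e0).
apply: (filterS _ (filterI N1 N2)) => w [/= B1 B2]; apply: He.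
apply: coord_ball => // i; rewrite !mxE; case: splitP => j _.
  exact: ball_coord B1 j.
exact: ball_coord B2 j.
Qed.

End L15.

Section L16.
Variable R : realType.

Lemma homeo_inv_BL k (h hinv : 'rV[R]_k -> 'rV[R]_k) r K1 K2 :
  BL h r K1 K2 -> homeo_germ_inv h hinv ->
  exists rho, [/\ 0 < rho, BL hinv rho K2^-1 K1^-1,
    (forall y, enorm y < rho -> h (hinv y) = y) &
    (forall x, enorm x < rho -> hinv (h x) = x)].
Proof.
move=> [h0 r0 K10 K12 HB] [_ [U [V [[oU oV U0 V0] [HU HV cU cV]]]]].
have hi0 : hinv 0 = 0 by have [_] := HU 0 U0; rewrite h0.
rewrite continuous_open_subspace // in cV.
have cV0 := cV 0 (mem_set V0).
have [d1 d10 Hd1] := cont0_enorm hi0 cV0 r0.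
have [d2 d20 Hd2] := open0_enorm oV V0.
have [d3 d30 Hd3] := open0_enorm oU U0.
exists (Num.min d1 (Num.min d2 d3)); split.
- by rewrite !lt_min d10 d20 d30.
- have K20 : 0 < K2 by apply: lt_le_trans K12.
  split.
  + exact: hi0.
  + by rewrite !lt_min d10 d20 d30.
  + by rewrite invr_gt0; apply: lt_le_trans K12.
  + by rewrite lef_pV2 ?posrE.
  move=> y y'; rewrite !lt_min => /andP[y1 /andP[y2 _]] /andP[y1' /andP[y2' _]].
  have [_ Ey] := HV y (Hd2 _ y2); have [_ Ey'] := HV y' (Hd2 _ y2').
  have /andP[L U'] := HB _ _ (Hd1 _ y1) (Hd1 _ y1'); rewrite Ey Ey' in L U'.
  apply/andP; split.
    by rewrite ler_pdivrMl.
  by rewrite ler_pdivlMl.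
- by move=> y; rewrite !lt_min => /andP[_ /andP[y2 _]]; have [] := HV y (Hd2 _ y2).
- by move=> x; rewrite !lt_min => /andP[_ /andP[_ x3]]; have [] := HU x (Hd3 _ x3).
Qed.

Lemma homeo_prod n1 n2 (h1 : 'rV[R]_n1 -> 'rV[R]_n1) (h2 : 'rV[R]_n2 -> 'rV[R]_n2) :
  homeo_germ h1 -> homeo_germ h2 -> homeo_germ (prod_map h1 h2).
Proof.
move=> [g1 [h10 [U1 [V1 [[oU1 oV1 U10 V10] [HU1 HV1 cU1 cV1]]]]]].
move=> [g2 [h20 [U2 [V2 [[oU2 oV2 U20 V20] [HU2 HV2 cU2 cV2]]]]]].
exists (prod_map g1 g2); split; first exact: prod0.
exists (lsubmx @^-1` U1 `&` rsubmx @^-1` U2), (lsubmx @^-1` V1 `&` rsubmx @^-1` V2).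
have oP : forall (A1 : set 'rV[R]_n1) (A2 : set 'rV[R]_n2), open A1 -> open A2 ->
    open (lsubmx @^-1` A1 `&` rsubmx @^-1` A2 : set 'rV[R]_(n1 + n2)).
  move=> A1 A2 o1 o2; apply: openI.
    by apply: open_comp => // z _; apply: continuous_lsubmx.
  by apply: open_comp => // z _; apply: continuous_rsubmx.
split; first split.
- exact: oP.
- exact: oP.
- by split => /=; rewrite linear0.
- by split => /=; rewrite linear0.
rewrite continuous_open_subspace // in cU1.
rewrite continuous_open_subspace // in cU2.
rewrite continuous_open_subspace // in cV1.
rewrite continuous_open_subspace // in cV2.
split.
- move=> z [/= z1 z2]; have [Va Ea] := HU1 _ z1; have [Vb Eb] := HU2 _ z2.
  rewrite !prod_mapE /= !row_mxKl !row_mxKr Ea Eb hsubmxK; split => //.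
- move=> z [/= z1 z2]; have [Va Ea] := HV1 _ z1; have [Vb Eb] := HV2 _ z2.
  rewrite !prod_mapE /= !row_mxKl !row_mxKr Ea Eb hsubmxK; split => //.
- rewrite continuous_open_subspace; last exact: oP.
  move=> z /set_mem [/= z1 z2]; apply: (continuous_row (f1 := h1 \o lsubmx) (f2 := h2 \o rsubmx)).
    exact: continuous_comp (@continuous_lsubmx _ 1 _ _ z) (cU1 _ (mem_set z1)).
  exact: continuous_comp (@continuous_rsubmx _ 1 _ _ z) (cU2 _ (mem_set z2)).
- rewrite continuous_open_subspace; last exact: oP.
  move=> z /set_mem [/= z1 z2]; apply: (continuous_row (f1 := g1 \o lsubmx) (f2 := g2 \o rsubmx)).
    exact: continuous_comp (@continuous_lsubmx _ 1 _ _ z) (cV1 _ (mem_set z1)).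
  exact: continuous_comp (@continuous_rsubmx _ 1 _ _ z) (cV2 _ (mem_set z2)).
Qed.

End L16.

Section L17.
Variable R : realType.

Lemma SSP_DD_iff k (h : 'rV[R]_k -> 'rV[R]_k) r K : Lip h r K -> (SSP_map h <-> DD h).
Proof. move=> HL; split; [exact: SSP_DD HL | exact: DD_SSP HL]. Qed.

Lemma semiline_iff n (g : 'rV[R]_n -> 'rV[R]_n) r K1 K2 : BL g r K1 K2 ->
  (semiline_SSP (prod_map (@id 'rV[R]_n) g) <-> DD g).
Proof.
move=> HB; split; [exact: semiline_DD (BL_Lip HB) | exact: DD_semiline HB].
Qed.

Lemma SSP_id_iff n (g : 'rV[R]_n -> 'rV[R]_n) r K1 K2 : BL g r K1 K2 ->
  (SSP_map (prod_map (@id 'rV[R]_n) g) <-> DD g).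
Proof.
move=> HB; have [g0 _ _ _ _] := HB.
rewrite (SSP_DD_iff (Lip_prod (Lip_id _ ltr01) (BL_Lip HB))).
rewrite (DD_prod (erefl _) g0); split; [by case | move=> H; split => //; exact: DD_id].
Qed.

Lemma DD_inv_iff n (h hinv : 'rV[R]_n -> 'rV[R]_n) r K1 K2 : BL h r K1 K2 ->
  homeo_germ_inv h hinv -> exists r' K1' K2', BL hinv r' K1' K2' /\ (DD h <-> DD hinv).
Proof.
move=> HB Hi; have [rho [rho0 HBi Hhi Hih]] := homeo_inv_BL HB Hi.
exists rho, K2^-1, K1^-1; split => //; split.
- exact: DD_inv HB (BL_Lip HBi) rho0 Hhi.
- exact: DD_inv HBi (BL_Lip HB) rho0 Hih.
Qed.

End L17.

Unset Implicit Arguments.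

Theorem proposition4p13 (R : realType) :
  (forall (n1 n2 : nat) (h1 : 'rV[R]_n1 -> 'rV[R]_n1)
          (h2 : 'rV[R]_n2 -> 'rV[R]_n2),
      homeo_germ h1 -> homeo_germ h2 ->
      (SSP_bilip_homeo h1 /\ SSP_bilip_homeo h2 <->
       SSP_bilip_homeo (prod_map h1 h2)))
  /\
  (forall (n : nat) (h hinv : 'rV[R]_n -> 'rV[R]_n),
      bilip_homeo h -> homeo_germ_inv h hinv ->
      (semiline_SSP (prod_map (@id 'rV[R]_n) h) <-> SSP_map (prod_map (@id 'rV[R]_n) h)) /\
      (semiline_SSP (prod_map (@id 'rV[R]_n) hinv) <-> SSP_map (prod_map (@id 'rV[R]_n) h)))
  /\
  (forall (n : nat) (h hinv : 'rV[R]_n -> 'rV[R]_n),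
      bilip_homeo h -> homeo_germ_inv h hinv ->
      (SSP_map h <-> semiline_SSP (prod_map (@id 'rV[R]_n) h)) /\
      (SSP_map h <-> semiline_SSP (prod_map (@id 'rV[R]_n) hinv))).
Proof.
split; [|split].
- move=> n1 n2 h1 h2 Hh1 Hh2.
  have [_ [h10 _]] := Hh1; have [_ [h20 _]] := Hh2.
  split.
  + move=> [[[_ /bilipP [r1 [a1 [b1 B1]]]] S1] [[_ /bilipP [r2 [a2 [b2 B2]]]] S2]].
    have BP := BL_prod B1 B2.
    split; first split.
    * exact: homeo_prod.
    * by apply/bilipP; do 3 eexists; exact: BP.
    * apply/(SSP_DD_iff (BL_Lip BP)); apply/DD_prod => //; split.
        exact/(SSP_DD_iff (BL_Lip B1)).
      exact/(SSP_DD_iff (BL_Lip B2)).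
  + move=> [[_ /bilipP [r [a [b BP]]]] SP].
    have B1 := BL_fst h20 BP; have B2 := BL_snd h10 BP.
    have /(DD_prod h10 h20) [D1 D2] := (SSP_DD_iff (BL_Lip BP)).1 SP.
    split; split; try split => //.
    * by apply/bilipP; do 3 eexists; exact: B1.
    * exact/(SSP_DD_iff (BL_Lip B1)).
    * by apply/bilipP; do 3 eexists; exact: B2.
    * exact/(SSP_DD_iff (BL_Lip B2)).
- move=> n h hinv [_ /bilipP [r [K1 [K2 B]]]] Hi.
  have [r' [K1' [K2' [Bi Ei]]]] := DD_inv_iff B Hi.
  rewrite (semiline_iff B) (semiline_iff Bi) (SSP_id_iff B).
  by split => //; split => H; apply/Ei.
- move=> n h hinv [_ /bilipP [r [K1 [K2 B]]]] Hi.
  have [r' [K1' [K2' [Bi Ei]]]] := DD_inv_iff B Hi.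
  rewrite (semiline_iff B) (semiline_iff Bi) (SSP_DD_iff (BL_Lip B)).
  by split => //; split => H; apply/Ei.
Qed.
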